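(* In the geometry $\Gamma_\mathbb{F}(\mathbb{A})$: (1) Two distinct lines $[x,u]$ and $[y,v]$ are coplanar (i.e. incident with a common plane) if and only if $(x|y)=(u|v)$; in that case the unique sharp $\mathbb{F}$-morphism $\phi:\mathbb{A}\to\mathbb{O}$ with $\phi(x)=u$ and $\phi(y)=v$ is the unique plane incident with both lines. (2) If two lines are incident with two distinct common points, then they are incident with exactly the same set of points.
   Context: $\mathbb{H}$ and $\mathbb{O}$ are the real quaternions and real octonions, with $\mathbb{C}\subset\mathbb{H}\subset\mathbb{O}$, norm $|\cdot|$, conjugation $x\mapsto\bar x$. Let $(\mathbb{F},\mathbb{A})$ be either $(\mathbb{R},\mathbb{H})$ or $(\mathbb{C},\mathbb{O})$. $\mathbb{A}$ and $\mathbb{O}$ are regarded as right $\mathbb{F}$-vector spaces via right multiplication by elements of $\mathbb{F}$. The real inner product is $(x|y)_\mathbb{R}=\mathrm{Re}(\bar x y)$; for $\mathbb{F}=\mathbb{R}$ put $(x|y)=(x|y)_\mathbb{R}$, and for $\mathbb{F}=\mathbb{C}$ let $(x|y)=(x|y)_\mathbb{C}$ be the $\mathbb{C}$-component of $\bar x y$ in the real-orthogonal decomposition $\mathbb{O}=\mathbb{C}\oplus\mathbb{C}^{\perp}$ (a Hermitian form with real part $(x|y)_\mathbb{R}$). Write $x\perp y$ if $(x|y)=0$. For $\mathbb{B}\in\{\mathbb{A},\mathbb{O}\}$, $\mathrm{Pu}_\mathbb{F}(\mathbb{B})$ is the real-orthogonal complement of $\mathbb{F}$ in $\mathbb{B}$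 (an $\mathbb{F}$-subspace; $\dim_\mathbb{F}\mathrm{Pu}_\mathbb{F}(\mathbb{A})=3$). A sharp $\mathbb{F}$-morphism $\mathbb{A}\to\mathbb{O}$ is an $\mathbb{F}$-linear multiplicative map preserving $(\cdot|\cdot)$. The geometry $\Gamma_\mathbb{F}(\mathbb{A})$ has: points the 1-dimensional $\mathbb{F}$-subspaces $[x]$ of $\mathrm{Pu}_\mathbb{F}(\mathbb{A})$; lines the sets $[x,u]=\{(xt,ut):t\in\mathbb{F}^*\}$ with $x\in\mathrm{Pu}_\mathbb{F}(\mathbb{A})$, $u\in\mathrm{Pu}_\mathbb{F}(\mathbb{O})$, $|x|=|u|\neq0$; planes the sharp $\mathbb{F}$-morphisms $\phi:\mathbb{A}\to\mathbb{O}$. Incidence: every point is incident with every plane; $[y]$ is incident with $[x,u]$ iff $(x|y)=0$; $[x,u]$ is incident with $\phi$ iff $\phi(x)=u$. It is a (flat) geometry of type $C_3$. *)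

(* Defs.v *)
(* Octonions are built by the Cayley--Dickson doubling
   R -> C -> H -> O, with product (a,b)(c,d) = (a c - conj(d) b, d a + b conj(c))
   and conjugation conj(a,b) = (conj a, -b). *)
From Stdlib Require Import Reals.
Open Scope R_scope.

Definition Cx : Type := (R * R)%type.
Definition Czero : Cx := (0, 0).
Definition Cone : Cx := (1, 0).
Definition Cadd (x y : Cx) : Cx := (fst x + fst y, snd x + snd y).
Definition Copp (x : Cx) : Cx := (- fst x, - snd x).
Definition Cmul (x y : Cx) : Cx :=
  (fst x * fst y - snd x * snd y, fst x * snd y + snd x * fst y).
Definition Cconj (x : Cx) : Cx := (fst x, - snd x).

Definition Hq : Type := (Cx * Cx)%type.
Definition Hzero : Hq := (Czero, Czero).
Definition Hadd (p q : Hq) : Hq := (Cadd (fst p) (fst q), Cadd (snd p) (snd q)).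
Definition Hopp (p : Hq) : Hq := (Copp (fst p), Copp (snd p)).
Definition Hmul (p q : Hq) : Hq :=
  (Cadd (Cmul (fst p) (fst q)) (Copp (Cmul (Cconj (snd q)) (snd p))),
   Cadd (Cmul (snd q) (fst p)) (Cmul (snd p) (Cconj (fst q)))).
Definition Hconj (p : Hq) : Hq := (Cconj (fst p), Copp (snd p)).

Definition Oc : Type := (Hq * Hq)%type.
Definition Ozero : Oc := (Hzero, Hzero).
Definition Oadd (p q : Oc) : Oc := (Hadd (fst p) (fst q), Hadd (snd p) (snd q)).
Definition Oopp (p : Oc) : Oc := (Hopp (fst p), Hopp (snd p)).
Definition Omul (p q : Oc) : Oc :=
  (Hadd (Hmul (fst p) (fst q)) (Hopp (Hmul (Hconj (snd q)) (snd p))),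
   Hadd (Hmul (snd q) (fst p)) (Hmul (snd p) (Hconj (fst q)))).
Definition Oconj (p : Oc) : Oc := (Hconj (fst p), Hopp (snd p)).

Definition RtoH (r : R) : Hq := ((r, 0), Czero).
Definition CtoO (c : Cx) : Oc := ((c, Czero), Hzero).
Definition HtoO (q : Hq) : Oc := (q, Hzero).
Definition RtoO (r : R) : Oc := HtoO (RtoH r).

Definition realip (x y : Oc) : R := fst (fst (fst (Omul (Oconj x) y))).
Definition onorm (x : Oc) : R := sqrt (realip x x).

Inductive case := RH | CO.

Definition Fty (k : case) : Type := match k with RH => R | CO => Cx end.
Definition Aty (k : case) : Type := match k with RH => Hq | CO => Oc end.

Definition fzero (k : case) : Fty k := match k with RH => 0 | CO => Czero end.

Definition incF (k : case) : Fty k -> Oc :=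
  match k with RH => RtoO | CO => CtoO end.
Definition emb (k : case) : Aty k -> Oc :=
  match k with RH => HtoO | CO => fun o => o end.

Definition aadd (k : case) : Aty k -> Aty k -> Aty k :=
  match k with RH => Hadd | CO => Oadd end.
Definition amul (k : case) : Aty k -> Aty k -> Aty k :=
  match k with RH => Hmul | CO => Omul end.
Definition ascale (k : case) : Aty k -> Fty k -> Aty k :=
  match k with
  | RH => fun x t => Hmul x (RtoH t)
  | CO => fun x t => Omul x (CtoO t)
  end.
Definition oscale (k : case) (u : Oc) (t : Fty k) : Oc := Omul u (incF k t).

(* the form (x|y) on O: real part of conj x * y for F = R,
   C-component of conj x * y for F = C *)
Definition ip (k : case) : Oc -> Oc -> Fty k :=
  match k with
  | RH => realip
  | CO => fun x y => fst (fst (Omul (Oconj x) y))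
  end.
Definition ipA (k : case) (x y : Aty k) : Fty k := ip k (emb k x) (emb k y).

(* Pu_F(O) and Pu_F(A): real-orthogonal complement of F *)
Definition PuO (k : case) (u : Oc) : Prop :=
  forall t : Fty k, realip (incF k t) u = 0.
Definition PuA (k : case) (x : Aty k) : Prop := PuO k (emb k x).

Definition sharp (k : case) (phi : Aty k -> Oc) : Prop :=
  (forall x y, phi (aadd k x y) = Oadd (phi x) (phi y)) /\
  (forall x t, phi (ascale k x t) = oscale k (phi x) t) /\
  (forall x y, phi (amul k x y) = Omul (phi x) (phi y)) /\
  (forall x y, ip k (phi x) (phi y) = ipA k x y).

(* a point [p]: p a nonzero element of Pu_F(A); [p] = p F *)
Definition is_point (k : case) (p : Aty k) : Prop :=
  PuA k p /\ emb k p <> Ozero.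
Definition pt_set (k : case) (p : Aty k) : Aty k -> Prop :=
  fun a => exists t : Fty k, a = ascale k p t.

Definition is_line (k : case) (x : Aty k) (u : Oc) : Prop :=
  PuA k x /\ PuO k u /\ onorm (emb k x) = onorm u /\ onorm u <> 0.
Definition line_set (k : case) (x : Aty k) (u : Oc) : Aty k -> Oc -> Prop :=
  fun a b => exists t : Fty k, t <> fzero k /\ a = ascale k x t /\ b = oscale k u t.

Definition pt_line_inc (k : case) (p : Aty k) (x : Aty k) (u : Oc) : Prop :=
  ipA k x p = fzero k.
Definition line_plane_inc (k : case) (x : Aty k) (u : Oc) (phi : Aty k -> Oc) : Prop :=
  phi x = u.

(* Main.v *)
Require Import Defs.
From Stdlib Require Import Reals Lra Ring Ring_theory FunctionalExtensionality PropExtensionality.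

Record V (K : Type) := mkV { v1 : K; v2 : K; v3 : K; v4 : K; v5 : K; v6 : K; v7 : K }.
Arguments mkV {K}. Arguments v1 {K}. Arguments v2 {K}. Arguments v3 {K}. Arguments v4 {K}.
Arguments v5 {K}. Arguments v6 {K}. Arguments v7 {K}.

Definition gvadd {K} (kadd : K -> K -> K) (a b : V K) : V K :=
  mkV (kadd (v1 a) (v1 b)) (kadd (v2 a) (v2 b)) (kadd (v3 a) (v3 b)) (kadd (v4 a) (v4 b))
      (kadd (v5 a) (v5 b)) (kadd (v6 a) (v6 b)) (kadd (v7 a) (v7 b)).
Definition gvsc {K} (kmul : K -> K -> K) (a : V K) (k : K) : V K :=
  mkV (kmul (v1 a) k) (kmul (v2 a) k) (kmul (v3 a) k) (kmul (v4 a) k)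
      (kmul (v5 a) k) (kmul (v6 a) k) (kmul (v7 a) k).
Definition gvz {K} (kz : K) : V K := mkV kz kz kz kz kz kz kz.
Definition glc3 {K} (kadd kmul : K -> K -> K) (a1 a2 a3 : K) (e1 e2 e3 : V K) : V K :=
  gvadd kadd (gvsc kmul e1 a1) (gvadd kadd (gvsc kmul e2 a2) (gvsc kmul e3 a3)).

Lemma vext {K} (a b : V K) : v1 a = v1 b -> v2 a = v2 b -> v3 a = v3 b -> v4 a = v4 b ->
  v5 a = v5 b -> v6 a = v6 b -> v7 a = v7 b -> a = b.
Proof. destruct a, b; simpl; intros; subst; reflexivity. Qed.

Record SPACE := mkSPACE {
  K : Type;
  kz : K; ko : K; kadd : K -> K -> K; kmul : K -> K -> K; kopp : K -> K; kconj : K -> K; kinv : K -> K;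
  h : V K -> V K -> K;
  cr : V K -> V K -> V K;
  P : V K -> Prop; Q : V K -> Prop;
  Kth : ring_theory kz ko kadd kmul (fun a b => kadd a (kopp b)) kopp eq;
  ko_nz : ko <> kz;
  kinv_r : forall a, a <> kz -> kmul a (kinv a) = ko;
  conj_add : forall a b, kconj (kadd a b) = kadd (kconj a) (kconj b);
  conj_mul : forall a b, kconj (kmul a b) = kmul (kconj a) (kconj b);
  conj_invol : forall a, kconj (kconj a) = a;
  conj_one : kconj ko = ko;
  h_addl : forall a b c, h (gvadd kadd a b) c = kadd (h a c) (h b c);
  h_addr : forall a b c, h a (gvadd kadd b c) = kadd (h a b) (h a c);
  h_scl : forall a b k, h (gvsc kmul a k) b = kmul (kconj k) (h a b);
  h_scr : forall a b k, h a (gvsc kmul b k) = kmul (h a b) k;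
  h_sym : forall a b, h b a = kconj (h a b);
  cr_addl : forall a b c, cr (gvadd kadd a b) c = gvadd kadd (cr a c) (cr b c);
  cr_addr : forall a b c, cr a (gvadd kadd b c) = gvadd kadd (cr a b) (cr a c);
  cr_scl : forall a b k, cr (gvsc kmul a k) b = gvsc kmul (cr a b) (kconj k);
  cr_scr : forall a b k, cr a (gvsc kmul b k) = gvsc kmul (cr a b) (kconj k);
  P_add : forall a b, P a -> P b -> P (gvadd kadd a b);
  P_sc : forall a k, P a -> P (gvsc kmul a k);
  P_cr : forall a b, P a -> P b -> P (cr a b);
  Q_add : forall a b, Q a -> Q b -> Q (gvadd kadd a b);
  Q_sc : forall a k, Q a -> Q (gvsc kmul a k);
  Q_cr : forall a b, Q a -> Q b -> Q (cr a b);
  Q_P : forall a, Q a -> P a;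
  cr_self : forall a, P a -> cr a a = gvz kz;
  cr_anti : forall a b, P a -> P b -> cr b a = gvsc kmul (cr a b) (kopp ko);
  cr_cr : forall a b, P a -> P b ->
    cr a (cr a b) = gvadd kadd (gvsc kmul a (h a b)) (gvsc kmul b (kopp (h a a)));
  h_cr1 : forall a b, P a -> P b -> h a (cr a b) = kz;
  h_cr2 : forall a b, P a -> P b -> h b (cr a b) = kz;
  h_crcr : forall a b, P a -> P b ->
    h (cr a b) (cr a b) = kadd (kmul (h a a) (h b b)) (kopp (kmul (h a b) (h b a)));
  h_pos : forall a, P a -> h a a = kz -> a = gvz kz;
  decomp : forall a p q, Q a -> Q p -> Q q ->
    gvsc kmul a (kadd (kmul (h p p) (h q q)) (kopp (kmul (h p q) (h q p)))) =
    glc3 kadd kmul (kadd (kmul (h q q) (h p a)) (kopp (kmul (h p q) (h q a))))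
      (kadd (kmul (h p p) (h q a)) (kopp (kmul (h q p) (h p a)))) (h (cr p q) a) p q (cr p q)
}.

Section GenF.
Variable S : SPACE.
Local Notation K := (K S).
Local Notation kz := (kz S).
Local Notation ko := (ko S).
Local Notation kadd := (kadd S).
Local Notation kmul := (kmul S).
Local Notation kopp := (kopp S).
Local Notation kconj := (kconj S).
Local Notation kinv := (kinv S).
Local Notation h := (h S).
Local Notation cr := (cr S).
Local Notation P := (P S).
Local Notation Q := (Q S).
Local Notation Kth := (Kth S).
Local Notation ko_nz := (ko_nz S).
Local Notation kinv_r := (kinv_r S).
Local Notation conj_add := (conj_add S).
Local Notation conj_mul := (conj_mul S).
Local Notation conj_invol := (conj_invol S).
Local Notation conj_one := (conj_one S).
Local Notation h_addl := (h_addl S).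
Local Notation h_addr := (h_addr S).
Local Notation h_scl := (h_scl S).
Local Notation h_scr := (h_scr S).
Local Notation h_sym := (h_sym S).
Local Notation cr_addl := (cr_addl S).
Local Notation cr_addr := (cr_addr S).
Local Notation cr_scl := (cr_scl S).
Local Notation cr_scr := (cr_scr S).
Local Notation P_add := (P_add S).
Local Notation P_sc := (P_sc S).
Local Notation P_cr := (P_cr S).
Local Notation Q_add := (Q_add S).
Local Notation Q_sc := (Q_sc S).
Local Notation Q_cr := (Q_cr S).
Local Notation Q_P := (Q_P S).
Local Notation cr_self := (cr_self S).
Local Notation cr_anti := (cr_anti S).
Local Notation cr_cr := (cr_cr S).
Local Notation h_cr1 := (h_cr1 S).
Local Notation h_cr2 := (h_cr2 S).
Local Notation h_crcr := (h_crcr S).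
Local Notation h_pos := (h_pos S).
Local Notation decomp := (decomp S).
Add Ring Kr : Kth.
Let hh_P_add := P_add.
Let hh_P_sc := P_sc.
Let hh_P_cr := P_cr.
Let hh_Q_add := Q_add.
Let hh_Q_sc := Q_sc.
Let hh_Q_cr := Q_cr.
Let hh_Q_P := Q_P.
Let hh_cr_anti := cr_anti.
Let hh_cr_cr := cr_cr.
Let hh_cr_self := cr_self.
Let hh_h_cr1 := h_cr1.
Let hh_h_cr2 := h_cr2.
Let hh_h_crcr := h_crcr.
#[local] Hint Resolve hh_P_add hh_P_sc hh_P_cr hh_Q_add hh_Q_sc hh_Q_cr hh_Q_P hh_cr_anti hh_cr_cr hh_cr_self hh_h_cr1 hh_h_cr2 hh_h_crcr : core.
Local Notation vadd := (gvadd kadd).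
Local Notation vsc := (gvsc kmul).
Local Notation vz := (gvz kz).
Local Notation lc3 := (glc3 kadd kmul).
Local Notation "a + b" := (kadd a b).
Local Notation "a * b" := (kmul a b).
Local Notation "- a" := (kopp a).
Local Notation "a - b" := (kadd a (kopp b)).
Ltac vring := apply vext; cbn [gvadd gvsc gvz glc3 v1 v2 v3 v4 v5 v6 v7]; ring.
Lemma conj_zero : kconj kz = kz.
Proof.
  assert (H : kconj kz = kconj kz + kconj kz).
  { rewrite <- conj_add. f_equal. ring. }
  transitivity (kconj kz + kconj kz - kconj kz); [ring | rewrite <- H; ring].
Qed.

Lemma conj_opp a : kconj (- a) = - kconj a.
Proof.
  assert (H : kconj (- a) + kconj a = kz).
  { rewrite <- conj_add. replace (-a + a) with kz by ring. apply conj_zero. }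
  transitivity (kconj (- a) + kconj a - kconj a); [ring | rewrite H; ring].
Qed.

Lemma mul_integral a b : a * b = kz -> a <> kz -> b = kz.
Proof.
  intros H Ha. transitivity (kinv a * (a * b)).
  - transitivity ((a * kinv a) * b); [rewrite kinv_r by exact Ha; ring | ring].
  - rewrite H; ring.
Qed.

Lemma conj_nz a : a <> kz -> kconj a <> kz.
Proof. intros H C. apply H. rewrite <- (conj_invol a), C. apply conj_zero. Qed.

Lemma vsc_vsc a k l : vsc (vsc a k) l = vsc a (k * l).
Proof. vring. Qed.
Lemma vsc_one a : vsc a ko = a.
Proof. vring. Qed.

Lemma vsc_zero_inv a k : vsc a k = vz -> k <> kz -> a = vz.
Proof.
  intros H Hk. rewrite <- (vsc_one a), <- (kinv_r k Hk), <- vsc_vsc, H. vring.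
Qed.

Definition Dg (p q : V K) := h p p * h q q - h p q * h q p.
Definition lam1 (p q a : V K) := h q q * h p a - h p q * h q a.
Definition lam2 (p q a : V K) := h p p * h q a - h q p * h p a.
Definition lam3 (p q a : V K) := h (cr p q) a.
Lemma decomp' a p q : Q a -> Q p -> Q q ->
  vsc a (Dg p q) = lc3 (lam1 p q a) (lam2 p q a) (lam3 p q a) p q (cr p q).
Proof. apply decomp. Qed.

Lemma h_zl b : h vz b = kz.
Proof.
  replace vz with (vsc vz kz) by vring. rewrite h_scl, conj_zero. ring.
Qed.
Lemma h_zr b : h b vz = kz.
Proof. replace vz with (vsc vz kz) by vring. rewrite h_scr. ring. Qed.

Lemma h_lc3 a1 a2 a3 e1 e2 e3 b1 b2 b3 f1 f2 f3 :
  h (lc3 a1 a2 a3 e1 e2 e3) (lc3 b1 b2 b3 f1 f2 f3) =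
  kconj a1 * b1 * h e1 f1 + kconj a1 * b2 * h e1 f2 + kconj a1 * b3 * h e1 f3 +
  kconj a2 * b1 * h e2 f1 + kconj a2 * b2 * h e2 f2 + kconj a2 * b3 * h e2 f3 +
  kconj a3 * b1 * h e3 f1 + kconj a3 * b2 * h e3 f2 + kconj a3 * b3 * h e3 f3.
Proof.
  unfold glc3. repeat rewrite ?h_addl, ?h_addr, ?h_scl, ?h_scr. ring.
Qed.

Lemma h_gram a1 a2 a3 b1 b2 b3 e1 e2 e3 g11 g12 g22 d :
  h e1 e1 = g11 -> h e1 e2 = g12 -> h e2 e2 = g22 ->
  h e1 e3 = kz -> h e2 e3 = kz -> h e3 e3 = d ->
  h (lc3 a1 a2 a3 e1 e2 e3) (lc3 b1 b2 b3 e1 e2 e3) =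
  kconj a1 * b1 * g11 + kconj a1 * b2 * g12 +
  kconj a2 * b1 * kconj g12 + kconj a2 * b2 * g22 + kconj a3 * b3 * d.
Proof.
  intros H11 H12 H22 H13 H23 H33.
  rewrite h_lc3, (h_sym e1 e2), (h_sym e1 e3), (h_sym e2 e3), H11, H12, H22, H13, H23, H33,
    conj_zero. ring.
Qed.

Section Table.
Variables p q w : V K.
Hypothesis Pp : P p.
Hypothesis Pq : P q.
Hypothesis Hw : cr p q = w.

Lemma table a1 a2 a3 b1 b2 b3 :
  cr (lc3 a1 a2 a3 p q w) (lc3 b1 b2 b3 p q w) =
  lc3 (h p q * (kconj a1 * kconj b3 - kconj a3 * kconj b1)
        + h q q * (kconj a2 * kconj b3 - kconj a3 * kconj b2))
      (- (h p p * (kconj a1 * kconj b3 - kconj a3 * kconj b1))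
        - h q p * (kconj a2 * kconj b3 - kconj a3 * kconj b2))
      (kconj a1 * kconj b2 - kconj a2 * kconj b1) p q w.
Proof.
  assert (Pw : P w) by (rewrite <- Hw; auto).
  assert (T21 : cr q p = vsc w (- ko)) by (rewrite <- Hw; auto).
  assert (T13 : cr p w = vadd (vsc p (h p q)) (vsc q (- h p p))) by (rewrite <- Hw; auto).
  assert (T23 : cr q w = vadd (vsc p (h q q)) (vsc q (- h q p))).
  { rewrite <- Hw, (cr_anti _ _ Pq Pp), cr_scr, cr_cr by auto.
    rewrite conj_opp, conj_one. vring. }
  assert (T31 : cr w p = vsc (cr p w) (- ko)) by auto.
  assert (T32 : cr w q = vsc (cr q w) (- ko)) by auto.
  rewrite T13 in T31. rewrite T23 in T32.
  unfold glc3. repeat rewrite ?cr_addl, ?cr_addr, ?cr_scl, ?cr_scr.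
  rewrite (cr_self _ Pp), (cr_self _ Pq), (cr_self _ Pw), Hw, T21, T13, T23, T31, T32.
  vring.
Qed.
End Table.


Lemma hpp_real p : kconj (h p p) = h p p.
Proof. rewrite <- h_sym. reflexivity. Qed.
Lemma hpq_conj p q : kconj (h p q) = h q p.
Proof. rewrite <- h_sym. reflexivity. Qed.

Lemma cs p q : P p -> P q -> Dg p q = kz -> vsc q (h p p) = vsc p (h p q).
Proof.
  intros Pp Pq HD.
  set (w := vadd (vsc q (h p p)) (vsc p (- h p q))).
  assert (Pw : P w) by (unfold w; auto).
  assert (Hww : h w w = h p p * Dg p q).
  { unfold w. repeat rewrite ?h_addl, ?h_addr, ?h_scl, ?h_scr.
    rewrite conj_opp, !hpp_real, !hpq_conj, (h_sym p q), hpq_conj. unfold Dg. ring. }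
  rewrite HD in Hww.
  assert (w = vz) by (apply h_pos; auto; rewrite Hww; ring).
  transitivity (vadd w (vsc p (h p q))); [unfold w; vring | rewrite H; vring].
Qed.

Section Perp.
Variables p q : V K.
Hypothesis Qp : Q p.
Hypothesis Qq : Q q.
Hypothesis HD : Dg p q <> kz.

Lemma perp_span x r : Q x -> h x p = kz -> h x q = kz ->
  kconj (Dg p q) * h x r = kconj (lam3 p q x) * h (cr p q) r.
Proof.
  intros Qx H1 H2.
  pose proof (decomp' x p q Qx Qp Qq) as E.
  assert (E1 : lam1 p q x = kz).
  { unfold lam1. rewrite (h_sym x p), (h_sym x q), H1, H2, conj_zero. ring. }
  assert (E2 : lam2 p q x = kz).
  { unfold lam2. rewrite (h_sym x p), (h_sym x q), H1, H2, conj_zero. ring. }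
  rewrite E1, E2 in E.
  rewrite <- h_scl, E. unfold glc3. rewrite !h_addl, !h_scl, conj_zero. ring.
Qed.

Lemma perp_nz x : Q x -> x <> vz -> h x p = kz -> h x q = kz -> lam3 p q x <> kz.
Proof.
  intros Qx Hx H1 H2 H3. apply Hx.
  pose proof (decomp' x p q Qx Qp Qq) as E.
  assert (E1 : lam1 p q x = kz).
  { unfold lam1. rewrite (h_sym x p), (h_sym x q), H1, H2, conj_zero. ring. }
  assert (E2 : lam2 p q x = kz).
  { unfold lam2. rewrite (h_sym x p), (h_sym x q), H1, H2, conj_zero. ring. }
  rewrite E1, E2, H3 in E.
  apply (vsc_zero_inv x (Dg p q)); auto. rewrite E. vring.
Qed.

Lemma perp_equiv x y r : Q x -> Q y -> x <> vz -> y <> vz ->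
  h x p = kz -> h x q = kz -> h y p = kz -> h y q = kz ->
  (h x r = kz <-> h y r = kz).
Proof.
  intros Qx Qy nx ny Hxp Hxq Hyp Hyq.
  pose proof (perp_span x r Qx Hxp Hxq) as Ex.
  pose proof (perp_span y r Qy Hyp Hyq) as Ey.
  pose proof (conj_nz _ (perp_nz x Qx nx Hxp Hxq)) as Nx.
  pose proof (conj_nz _ (perp_nz y Qy ny Hyp Hyq)) as Ny.
  pose proof (conj_nz _ HD) as ND.
  split; intro Z.
  - rewrite Z in Ex. assert (W : h (cr p q) r = kz).
    { apply (mul_integral (kconj (lam3 p q x))); auto. rewrite <- Ex. ring. }
    rewrite W in Ey. apply (mul_integral (kconj (Dg p q))); auto. rewrite Ey. ring.
  - rewrite Z in Ey. assert (W : h (cr p q) r = kz).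
    { apply (mul_integral (kconj (lam3 p q y))); auto. rewrite <- Ey. ring. }
    rewrite W in Ex. apply (mul_integral (kconj (Dg p q))); auto. rewrite Ex. ring.
Qed.
End Perp.


Lemma vsc_div Y X a b : vsc Y a = vsc X b -> a <> kz -> Y = vsc X (b * kinv a).
Proof. intros H Ha. rewrite <- (vsc_one Y), <- (kinv_r a Ha), <- vsc_vsc, H, vsc_vsc. reflexivity. Qed.

Lemma Dg_gram f g p q : h f f = h p p -> h g g = h q q -> h f g = h p q -> Dg f g = Dg p q.
Proof.
  intros H1 H2 H3. unfold Dg. rewrite (h_sym f g), (h_sym p q), H1, H2, H3. reflexivity.
Qed.

Section Lmap.
Variables p q f g : V K.
Hypothesis Qp : Q p.
Hypothesis Qq : Q q.
Hypothesis Pf : P f.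
Hypothesis Pg : P g.
Hypothesis Gff : h f f = h p p.
Hypothesis Ggg : h g g = h q q.
Hypothesis Gfg : h f g = h p q.
Variable dinv : K.
Hypothesis Hdinv : Dg p q * dinv = ko.

Definition L (a : V K) : V K :=
  vsc (lc3 (lam1 p q a) (lam2 p q a) (lam3 p q a) f g (cr f g)) dinv.

Lemma L_add a b : L (vadd a b) = vadd (L a) (L b).
Proof. unfold L, lam1, lam2, lam3. rewrite !h_addr. vring. Qed.

Lemma L_sc a k : L (vsc a k) = vsc (L a) k.
Proof. unfold L, lam1, lam2, lam3. rewrite !h_scr. vring. Qed.

Lemma L_P a : P (L a).
Proof. unfold L, lc3. auto 10. Qed.

Let Pp : P p := Q_P _ Qp.
Let Pq : P q := Q_P _ Qq.

Lemma Gqp : h g f = h q p.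
Proof. rewrite (h_sym f g), (h_sym p q), Gfg. reflexivity. Qed.

Lemma L_lc3 b1 b2 b3 : L (lc3 b1 b2 b3 p q (cr p q)) = lc3 b1 b2 b3 f g (cr f g).
Proof.
  unfold L, lam1, lam2, lam3, lc3.
  repeat rewrite ?h_addr, ?h_scr.
  rewrite (h_sym p (cr p q)), (h_sym q (cr p q)), (h_cr1 _ _ Pp Pq), (h_cr2 _ _ Pp Pq), (h_crcr _ _ Pp Pq),
    conj_zero.
  assert (HD : h p p * h q q = Dg p q + h p q * h q p) by (unfold Dg; ring).
  pose proof Hdinv as Hd. revert Hd HD. generalize (Dg p q). intros D Hd HD.
  apply vext; cbn [gvadd gvsc gvz glc3 v1 v2 v3 v4 v5 v6 v7]; ring [HD Hd].
Qed.

Lemma L_p : L p = f.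
Proof.
  transitivity (L (lc3 ko kz kz p q (cr p q))).
  - f_equal. vring.
  - rewrite L_lc3. vring.
Qed.

Lemma L_q : L q = g.
Proof.
  transitivity (L (lc3 kz ko kz p q (cr p q))).
  - f_equal. vring.
  - rewrite L_lc3. vring.
Qed.

Lemma L_w : L (cr p q) = cr f g.
Proof.
  transitivity (L (lc3 kz kz ko p q (cr p q))).
  - f_equal. vring.
  - rewrite L_lc3. vring.
Qed.

Lemma decomp_inv a : Q a ->
  a = vsc (lc3 (lam1 p q a) (lam2 p q a) (lam3 p q a) p q (cr p q)) dinv.
Proof.
  intro Qa. rewrite <- decomp' by auto. rewrite vsc_vsc, Hdinv, vsc_one. reflexivity.
Qed.

Lemma gramF :
  h (cr f g) (cr f g) = Dg p q.
Proof. rewrite h_crcr by auto. rewrite Gff, Ggg, Gfg, Gqp. reflexivity. Qed.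

Lemma L_unit a b : Q a -> Q b -> h (L a) (L b) = h a b.
Proof.
  intros Qa Qb.
  pose proof (decomp_inv a Qa) as Ea. pose proof (decomp_inv b Qb) as Eb.
  unfold L.
  set (a1 := lam1 p q a) in *. set (a2 := lam2 p q a) in *. set (a3 := lam3 p q a) in *.
  set (b1 := lam1 p q b) in *. set (b2 := lam2 p q b) in *. set (b3 := lam3 p q b) in *.
  clearbody a1 a2 a3 b1 b2 b3.
  rewrite Ea, Eb. rewrite !h_scl, !h_scr.
  rewrite (h_gram a1 a2 a3 b1 b2 b3 f g (cr f g) (h p p) (h p q) (h q q) (Dg p q));
    auto using gramF.
  rewrite (h_gram a1 a2 a3 b1 b2 b3 p q (cr p q) (h p p) (h p q) (h q q) (Dg p q)); auto.
Qed.

Lemma L_cr a b : Q a -> Q b -> L (cr a b) = cr (L a) (L b).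
Proof.
  intros Qa Qb.
  pose proof (decomp_inv a Qa) as Ea. pose proof (decomp_inv b Qb) as Eb.
  set (a1 := lam1 p q a) in *. set (a2 := lam2 p q a) in *. set (a3 := lam3 p q a) in *.
  set (b1 := lam1 p q b) in *. set (b2 := lam2 p q b) in *. set (b3 := lam3 p q b) in *.
  change (L a) with (vsc (lc3 a1 a2 a3 f g (cr f g)) dinv).
  change (L b) with (vsc (lc3 b1 b2 b3 f g (cr f g)) dinv).
  clearbody a1 a2 a3 b1 b2 b3.
  rewrite Ea, Eb. rewrite !cr_scl, !cr_scr, !L_sc.
  rewrite (table _ _ _ Pp Pq eq_refl), (table _ _ _ Pf Pg eq_refl), L_lc3.
  rewrite Gff, Ggg, Gfg, Gqp. reflexivity.
Qed.
End Lmap.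

End GenF.

Open Scope R_scope.

Definition vecO (o : Oc) : V R :=
  mkV (snd (fst (fst o))) (fst (snd (fst o))) (snd (snd (fst o)))
      (fst (fst (snd o))) (snd (fst (snd o))) (fst (snd (snd o))) (snd (snd (snd o))).
Definition ofO (r : R) (A : V R) : Oc :=
  (((r, v1 A), (v2 A, v3 A)), ((v4 A, v5 A), (v6 A, v7 A))).

Ltac dall := repeat match goal with
  | a : V _ |- _ => destruct a
  | z : Oc |- _ => destruct z
  | z : Hq |- _ => destruct z
  | z : Cx |- _ => destruct z
  | z : (_ * _)%type |- _ => destruct z
  end.

Module RS.
Definition K := R.
Definition kz : K := 0.
Definition ko : K := 1.
Definition kadd : K -> K -> K := Rplus.
Definition kmul : K -> K -> K := Rmult.
Definition kopp : K -> K := Ropp.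
Definition kconj : K -> K := fun x => x.
Definition kinv : K -> K := Rinv.
Lemma Kth : ring_theory kz ko kadd kmul (fun a b => kadd a (kopp b)) kopp eq.
Proof. constructor; intros; unfold K, kz, ko, kadd, kmul, kopp in *; ring. Qed.
Lemma ko_nz : ko <> kz.
Proof. unfold ko, kz; lra. Qed.
Lemma kinv_r : forall a, a <> kz -> kmul a (kinv a) = ko.
Proof. intros; unfold K, kmul, kinv, ko, kz in *; field; auto. Qed.
Lemma conj_add : forall a b, kconj (kadd a b) = kadd (kconj a) (kconj b).
Proof. reflexivity. Qed.
Lemma conj_mul : forall a b, kconj (kmul a b) = kmul (kconj a) (kconj b).
Proof. reflexivity. Qed.
Lemma conj_invol : forall a, kconj (kconj a) = a.
Proof. reflexivity. Qed.
Lemma conj_one : kconj ko = ko.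
Proof. reflexivity. Qed.
Definition h (A B : V K) : K :=
  v1 A * v1 B + v2 A * v2 B + v3 A * v3 B + v4 A * v4 B + v5 A * v5 B + v6 A * v6 B + v7 A * v7 B.
Definition cr (A B : V K) : V K :=
  let a1 := v1 A in let a2 := v2 A in let a3 := v3 A in let a4 := v4 A in
  let a5 := v5 A in let a6 := v6 A in let a7 := v7 A in
  let b1 := v1 B in let b2 := v2 B in let b3 := v3 B in let b4 := v4 B in
  let b5 := v5 B in let b6 := v6 B in let b7 := v7 B in
  mkV (a2*b3 - a3*b2 + a4*b5 - a5*b4 - a6*b7 + a7*b6)
      (- a1*b3 + a3*b1 + a4*b6 + a5*b7 - a6*b4 - a7*b5)
      (a1*b2 - a2*b1 + a4*b7 - a5*b6 + a6*b5 - a7*b4)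
      (- a1*b5 - a2*b6 - a3*b7 + a5*b1 + a6*b2 + a7*b3)
      (a1*b4 - a2*b7 + a3*b6 - a4*b1 - a6*b3 + a7*b2)
      (a1*b7 + a2*b4 - a3*b5 - a4*b2 + a5*b3 - a7*b1)
      (- a1*b6 + a2*b5 + a3*b4 - a4*b3 - a5*b2 + a6*b1).
Definition P (A : V K) : Prop := True.
Definition Q (A : V K) : Prop := v4 A = 0 /\ v5 A = 0 /\ v6 A = 0 /\ v7 A = 0.

Ltac sv := intros; dall; unfold h, cr,
  gvadd, gvsc, gvz, glc3, kadd, kmul, kopp, kconj, kz, ko, K in *; cbn in *.
Ltac svr := sv; try (apply vext; cbn); ring.

Lemma h_addl : forall a b c, h (gvadd kadd a b) c = kadd (h a c) (h b c). Proof. svr. Qed.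
Lemma h_addr : forall a b c, h a (gvadd kadd b c) = kadd (h a b) (h a c). Proof. svr. Qed.
Lemma h_scl : forall a b k, h (gvsc kmul a k) b = kmul (kconj k) (h a b). Proof. svr. Qed.
Lemma h_scr : forall a b k, h a (gvsc kmul b k) = kmul (h a b) k. Proof. svr. Qed.
Lemma h_sym : forall a b, h b a = kconj (h a b). Proof. svr. Qed.
Lemma cr_addl : forall a b c, cr (gvadd kadd a b) c = gvadd kadd (cr a c) (cr b c). Proof. svr. Qed.
Lemma cr_addr : forall a b c, cr a (gvadd kadd b c) = gvadd kadd (cr a b) (cr a c). Proof. svr. Qed.
Lemma cr_scl : forall a b k, cr (gvsc kmul a k) b = gvsc kmul (cr a b) (kconj k). Proof. svr. Qed.
Lemma cr_scr : forall a b k, cr a (gvsc kmul b k) = gvsc kmul (cr a b) (kconj k). Proof. svr. Qed.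
Lemma P_add : forall a b, P a -> P b -> P (gvadd kadd a b). Proof. unfold P; auto. Qed.
Lemma P_sc : forall a k, P a -> P (gvsc kmul a k). Proof. unfold P; auto. Qed.
Lemma P_cr : forall a b, P a -> P b -> P (cr a b). Proof. unfold P; auto. Qed.
Lemma Q_add : forall a b, Q a -> Q b -> Q (gvadd kadd a b).
Proof. unfold Q; sv; intuition; subst; ring. Qed.
Lemma Q_sc : forall a k, Q a -> Q (gvsc kmul a k).
Proof. unfold Q; sv; intuition; subst; ring. Qed.
Lemma Q_cr : forall a b, Q a -> Q b -> Q (cr a b).
Proof. unfold Q; sv; intuition; subst; ring. Qed.
Lemma Q_P : forall a, Q a -> P a. Proof. unfold P; auto. Qed.
Lemma cr_self : forall a, P a -> cr a a = gvz kz. Proof. svr. Qed.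
Lemma cr_anti : forall a b, P a -> P b -> cr b a = gvsc kmul (cr a b) (kopp ko). Proof. svr. Qed.
Lemma cr_cr : forall a b, P a -> P b ->
  cr a (cr a b) = gvadd kadd (gvsc kmul a (h a b)) (gvsc kmul b (kopp (h a a))).
Proof. svr. Qed.
Lemma h_cr1 : forall a b, P a -> P b -> h a (cr a b) = kz. Proof. svr. Qed.
Lemma h_cr2 : forall a b, P a -> P b -> h b (cr a b) = kz. Proof. svr. Qed.
Lemma h_crcr : forall a b, P a -> P b ->
  h (cr a b) (cr a b) = kadd (kmul (h a a) (h b b)) (kopp (kmul (h a b) (h b a))).
Proof. svr. Qed.
Lemma h_pos : forall a, P a -> h a a = kz -> a = gvz kz.
Proof.
  sv. apply vext; cbn; nra.
Qed.
Lemma decomp : forall a p q, Q a -> Q p -> Q q ->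
  gvsc kmul a (kadd (kmul (h p p) (h q q)) (kopp (kmul (h p q) (h q p)))) =
  glc3 kadd kmul (kadd (kmul (h q q) (h p a)) (kopp (kmul (h p q) (h q a))))
    (kadd (kmul (h p p) (h q a)) (kopp (kmul (h q p) (h p a)))) (h (cr p q) a) p q (cr p q).
Proof.
  unfold Q. intros a p q Ha Hp Hq.
  destruct Ha as (A4 & A5 & A6 & A7), Hp as (P4 & P5 & P6 & P7), Hq as (Q4 & Q5 & Q6 & Q7).
  dall. cbn in *. subst.
  unfold h, cr, gvadd, gvsc, gvz, glc3, kadd, kmul, kopp, kconj, kz, ko, K. cbn.
  apply vext; cbn; ring.
Qed.
End RS.

Definition RSp : SPACE := mkSPACE RS.K RS.kz RS.ko RS.kadd RS.kmul RS.kopp RS.kconj RS.kinv RS.h RS.cr RS.P RS.Q RS.Kth RS.ko_nz RS.kinv_r RS.conj_add RS.conj_mul RS.conj_invol RS.conj_one RS.h_addl RS.h_addr RS.h_scl RS.h_scr RS.h_sym RS.cr_addl RS.cr_addr RS.cr_scl RS.cr_scr RS.P_add RS.P_sc RS.P_cr RS.Q_add RS.Q_sc RS.Q_cr RS.Q_P RS.cr_self RS.cr_anti RS.cr_cr RS.h_cr1 RS.h_cr2 RS.h_crcr RS.h_pos RS.decomp.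


Open Scope R_scope.

Definition rO (o : Oc) : R := fst (fst (fst o)).
Notation VR := (V R).
Notation vaddR := (gvadd RS.kadd).
Notation vscR := (gvsc RS.kmul).

Ltac oun := cbv beta iota zeta delta [HtoO RtoO RtoH Ozero Hzero rO vecO ofO Oadd Omul Oconj Oopp
  Hadd Hmul Hopp Hconj Cadd Cmul Copp Cconj Czero realip gvadd gvsc gvz RS.h RS.cr RS.kadd RS.kmul
  RS.kz RS.K fst snd v1 v2 v3 v4 v5 v6 v7] in *.

Ltac pf := repeat match goal with |- (_, _) = (_, _) => f_equal end.

Lemma oc_eq a b : rO a = rO b -> vecO a = vecO b -> a = b.
Proof.
  dall. oun. cbn. intros H1 H2. injection H2; intros; subst. reflexivity.
Qed.

Lemma rO_ofO r A : rO (ofO r A) = r. Proof. reflexivity. Qed.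
Lemma vecO_ofO r A : vecO (ofO r A) = A. Proof. destruct A; reflexivity. Qed.

Lemma realip_dec a b : realip a b = rO a * rO b + RS.h (vecO a) (vecO b).
Proof. dall. oun. cbn. ring. Qed.

Lemma Omul_re a b : rO (Omul a b) = rO a * rO b - RS.h (vecO a) (vecO b).
Proof. dall. oun. cbn. ring. Qed.

Lemma Omul_vec a b : vecO (Omul a b) =
  vaddR (vaddR (vscR (vecO b) (rO a)) (vscR (vecO a) (rO b))) (RS.cr (vecO a) (vecO b)).
Proof. dall. oun. cbn. apply vext; cbn; ring. Qed.

Lemma Oadd_re a b : rO (Oadd a b) = rO a + rO b.
Proof. dall. oun. cbn. ring. Qed.
Lemma Oadd_vec a b : vecO (Oadd a b) = vaddR (vecO a) (vecO b).
Proof. dall. oun. cbn. apply vext; cbn; ring. Qed.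

Lemma Omul_RtoO_re a t : rO (Omul a (RtoO t)) = rO a * t.
Proof. dall. oun. cbn. ring. Qed.
Lemma Omul_RtoO_vec a t : vecO (Omul a (RtoO t)) = vscR (vecO a) t.
Proof. dall. oun. cbn. apply vext; cbn; ring. Qed.

Lemma HtoO_mul p q : HtoO (Hmul p q) = Omul (HtoO p) (HtoO q).
Proof. dall. oun. cbn. pf; ring. Qed.
Lemma HtoO_add p q : HtoO (Hadd p q) = Oadd (HtoO p) (HtoO q).
Proof. dall. oun. cbn. pf; ring. Qed.
Lemma HtoO_RtoH t : HtoO (RtoH t) = RtoO t.
Proof. reflexivity. Qed.
Lemma HtoO_inj p q : HtoO p = HtoO q -> p = q.
Proof. unfold HtoO. intro H. injection H. auto. Qed.

Lemma Q_HtoO p : RS.Q (vecO (HtoO p)).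
Proof. dall. unfold RS.Q. cbn. auto. Qed.

Lemma compo a b : realip (Omul a b) (Omul a b) = realip a a * realip b b.
Proof. dall. oun. cbn. ring. Qed.

Lemma realip_pos a : 0 <= realip a a.
Proof. dall. oun. cbn. nra. Qed.

Lemma realip_zero a : realip a a = 0 -> a = Ozero.
Proof. dall. oun. cbn. intro H. unfold Ozero, Hzero, Czero.
  pf; nra. Qed.

Lemma O_distr a b c : Omul a (Oadd b c) = Oadd (Omul a b) (Omul a c).
Proof. dall. oun. cbn. pf; ring. Qed.
Lemma O_neg a : Oadd a (Omul a (RtoO (-1))) = Ozero.
Proof. dall. oun. cbn. pf; ring. Qed.
Lemma O_sub_zero e : Oadd e (RtoO (-1)) = Ozero -> e = RtoO 1.
Proof.
  dall. oun. cbn. intro H. injection H. intros. pf; lra.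
Qed.
Lemma O_assoc_R u t s : Omul (Omul u (RtoO t)) (RtoO s) = Omul u (RtoO (t * s)).
Proof. dall. oun. cbn. pf; ring. Qed.
Lemma H_assoc_R u t s : Hmul (Hmul u (RtoH t)) (RtoH s) = Hmul u (RtoH (t * s)).
Proof. dall. oun. cbn. pf; ring. Qed.
Lemma Hmul_one_one : Hmul (RtoH 1) (RtoH 1) = RtoH 1.
Proof. oun. cbn. pf; ring. Qed.
Lemma realip_one : realip (HtoO (RtoH 1)) (HtoO (RtoH 1)) = 1.
Proof. oun. cbn. ring. Qed.

Open Scope R_scope.

Definition vH (q : Hq) : V R := vecO (HtoO q).
Definition rH (q : Hq) : R := rO (HtoO q).

Lemma hq_eq a b : rH a = rH b -> vH a = vH b -> a = b.
Proof. intros. apply HtoO_inj, oc_eq; auto. Qed.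

Lemma rH_add a b : rH (Hadd a b) = rH a + rH b.
Proof. unfold rH. rewrite HtoO_add, Oadd_re. reflexivity. Qed.
Lemma vH_add a b : vH (Hadd a b) = vaddR (vH a) (vH b).
Proof. unfold vH. rewrite HtoO_add, Oadd_vec. reflexivity. Qed.
Lemma rH_mul a b : rH (Hmul a b) = rH a * rH b - RS.h (vH a) (vH b).
Proof. unfold rH, vH. rewrite HtoO_mul, Omul_re. reflexivity. Qed.
Lemma vH_mul a b : vH (Hmul a b) =
  vaddR (vaddR (vscR (vH b) (rH a)) (vscR (vH a) (rH b))) (RS.cr (vH a) (vH b)).
Proof. unfold rH, vH. rewrite HtoO_mul, Omul_vec. reflexivity. Qed.
Lemma rH_sc a t : rH (Hmul a (RtoH t)) = rH a * t.
Proof. unfold rH. rewrite HtoO_mul, HtoO_RtoH, Omul_RtoO_re. reflexivity. Qed.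
Lemma vH_sc a t : vH (Hmul a (RtoH t)) = vscR (vH a) t.
Proof. unfold vH. rewrite HtoO_mul, HtoO_RtoH, Omul_RtoO_vec. reflexivity. Qed.
Lemma rH_one : rH (RtoH 1) = 1. Proof. reflexivity. Qed.
Lemma vH_one : vH (RtoH 1) = gvz RS.kz. Proof. reflexivity. Qed.
Ltac normR := repeat first [ change (h RSp) with RS.h in * | change (cr RSp) with RS.cr in *
  | change (kmul RSp) with RS.kmul in * | change (kadd RSp) with RS.kadd in *
  | change (kinv RSp) with RS.kinv in * | change (kz RSp) with RS.kz in * | change (ko RSp) with RS.ko in *
  | change (K RSp) with RS.K in * | change (kconj RSp) with RS.kconj in * | change (kopp RSp) with RS.kopp in *].

Lemma Q_vH a : Q RSp (vH a). Proof. apply Q_HtoO. Qed.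
Lemma P_RSp a : P RSp a. Proof. exact I. Qed.

Lemma ipA_RH a b : rH a = 0 -> @eq R (ipA RH a b) (RS.h (vH a) (vH b)).
Proof. intro H. unfold ipA, ip, emb. rewrite realip_dec. fold (rH a). rewrite H. unfold vH; ring. Qed.
Lemma ip_RH a b : rO a = 0 -> @eq R (ip RH a b) (RS.h (vecO a) (vecO b)).
Proof. intro H. unfold ip. rewrite realip_dec, H. ring. Qed.

Lemma PuA_RH x : PuA RH x -> rH x = 0.
Proof.
  intro H. specialize (H 1). cbv [incF emb] in H. rewrite realip_dec in H.
  unfold rH. rewrite <- H. unfold RtoO, HtoO, RtoH. cbn. unfold RS.h. cbn. ring.
Qed.
Lemma PuO_RH u : PuO RH u -> rO u = 0.
Proof.
  intro H. specialize (H 1). cbv [incF] in H. rewrite realip_dec in H.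
  rewrite <- H. unfold RtoO, HtoO, RtoH. cbn. unfold RS.h. cbn. ring.
Qed.

Lemma line_RH x u : is_line RH x u ->
  rH x = 0 /\ rO u = 0 /\ RS.h (vecO u) (vecO u) = RS.h (vH x) (vH x) /\
  RS.h (vecO u) (vecO u) <> 0.
Proof.
  intros (Hx & Hu & Hn & Hnz). apply PuA_RH in Hx. apply PuO_RH in Hu.
  cbv [emb onorm] in Hn, Hnz.
  apply sqrt_inj in Hn; try apply realip_pos.
  rewrite !realip_dec in Hn. fold (rH x) in Hn. rewrite Hx, Hu in Hn.
  repeat split; auto.
  - fold (vH x) in Hn. lra.
  - intro C. apply Hnz. rewrite realip_dec, Hu, C. replace (0 * 0 + 0) with 0 by ring. apply sqrt_0.
Qed.

Section Constr.
Variables (x y : Hq) (u v : Oc).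
Hypotheses (rx : rH x = 0) (ry : rH y = 0) (ru : rO u = 0) (rv : rO v = 0).
Hypothesis Gxx : RS.h (vecO u) (vecO u) = RS.h (vH x) (vH x).
Hypothesis Gyy : RS.h (vecO v) (vecO v) = RS.h (vH y) (vH y).
Hypothesis Gxy : RS.h (vecO u) (vecO v) = RS.h (vH x) (vH y).
Hypothesis HD : (Dg RSp) (vH x) (vH y) <> 0.

Let dinv := / (Dg RSp) (vH x) (vH y).
Lemma Hdinv : kmul RSp ((Dg RSp) (vH x) (vH y)) dinv = ko RSp.
Proof. change (Rmult (Dg RSp (vH x) (vH y)) dinv = 1). unfold dinv. field. exact HD. Qed.

Definition Lm := (L RSp) (vH x) (vH y) (vecO u) (vecO v) dinv.
Definition phi0 (a : Hq) : Oc := ofO (rH a) (Lm (vH a)).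

Lemma Lm_unit a b : RS.h (Lm (vH a)) (Lm (vH b)) = RS.h (vH a) (vH b).
Proof. apply (L_unit RSp); auto using Q_vH, Hdinv, P_RSp. Qed.
Lemma Lm_cr a b : Lm (RS.cr (vH a) (vH b)) = RS.cr (Lm (vH a)) (Lm (vH b)).
Proof. apply (L_cr RSp); auto using Q_vH, Hdinv, P_RSp. Qed.

Lemma phi0_sharp : sharp RH phi0.
Proof.
  unfold sharp. cbv [aadd ascale amul oscale ip ipA incF emb].
  split; [|split; [|split]]; intros a b.
  - apply oc_eq; unfold phi0.
    + rewrite Oadd_re, !rO_ofO, rH_add. reflexivity.
    + rewrite Oadd_vec, !vecO_ofO, vH_add. apply (L_add RSp).
  - apply oc_eq; unfold phi0.
    + rewrite Omul_RtoO_re, !rO_ofO, rH_sc. reflexivity.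
    + rewrite Omul_RtoO_vec, !vecO_ofO, vH_sc. apply (L_sc RSp).
  - apply oc_eq; unfold phi0.
    + rewrite Omul_re, !rO_ofO, !vecO_ofO, rH_mul, Lm_unit. reflexivity.
    + rewrite Omul_vec, !vecO_ofO, !rO_ofO, vH_mul. unfold Lm.
      rewrite !(L_add RSp), !(L_sc RSp). fold Lm. rewrite Lm_cr. reflexivity.
  - rewrite !realip_dec. unfold phi0. rewrite !rO_ofO, !vecO_ofO. fold (rH a) (rH b) (vH a) (vH b).
    rewrite Lm_unit. reflexivity.
Qed.

Lemma phi0_x : phi0 x = u.
Proof.
  apply oc_eq; unfold phi0; rewrite ?rO_ofO, ?vecO_ofO.
  - rewrite rx, ru. reflexivity.
  - apply (L_p RSp); auto using Q_vH, Hdinv.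
Qed.
Lemma phi0_y : phi0 y = v.
Proof.
  apply oc_eq; unfold phi0; rewrite ?rO_ofO, ?vecO_ofO.
  - rewrite ry, rv. reflexivity.
  - apply (L_q RSp); auto using Q_vH, Hdinv.
Qed.
End Constr.

Lemma sharp_one_RH phi : sharp RH phi -> phi (RtoH 1) = RtoO 1.
Proof.
  intros (_ & _ & Hm & Hi). cbv [amul ip ipA emb] in Hm, Hi.
  set (e := phi (RtoH 1)).
  assert (E1 : Omul e e = e) by (unfold e; rewrite <- Hm, Hmul_one_one; reflexivity).
  assert (E2 : realip e e = 1) by (unfold e; rewrite Hi; apply realip_one).
  assert (E3 : Omul e (Oadd e (RtoO (-1))) = Ozero) by (rewrite O_distr, E1; apply O_neg).
  apply O_sub_zero, realip_zero.
  assert (E4 := compo e (Oadd e (RtoO (-1)))). rewrite E3, E2 in E4.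
  rewrite <- (Rmult_1_l (realip _ _)), <- E4. unfold Ozero, Hzero, Czero, realip. cbn. ring.
Qed.

Section Uniq.
Variables (x y : Hq).
Hypotheses (rx : rH x = 0) (ry : rH y = 0).
Hypothesis HD : (Dg RSp) (vH x) (vH y) <> 0.
Let dinv := / (Dg RSp) (vH x) (vH y).

Lemma decomp_H a :
  let c := RS.h (vH x) (vH y) in
  let m1 := (lam1 RSp) (vH x) (vH y) (vH a) * dinv in
  let m2 := (lam2 RSp) (vH x) (vH y) (vH a) * dinv in
  let m3 := (lam3 RSp) (vH x) (vH y) (vH a) * dinv in
  a = Hadd (Hadd (Hadd (Hmul (RtoH 1) (RtoH (rH a))) (Hmul x (RtoH m1))) (Hmul y (RtoH m2)))
        (Hmul (Hadd (Hmul x y) (Hmul (RtoH 1) (RtoH c))) (RtoH m3)).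
Proof.
  intros c m1 m2 m3. apply hq_eq.
  - rewrite !rH_add, !rH_sc, rH_add, rH_mul, !rH_sc, rx, ry, rH_one. unfold c. ring.
  - rewrite !vH_add, !vH_sc, vH_add, vH_mul, vH_sc, rx, ry, vH_one.
    transitivity (gvsc RS.kmul (glc3 RS.kadd RS.kmul ((lam1 RSp) (vH x) (vH y) (vH a))
      ((lam2 RSp) (vH x) (vH y) (vH a)) ((lam3 RSp) (vH x) (vH y) (vH a)) (vH x) (vH y)
      (RS.cr (vH x) (vH y))) dinv).
    + apply (decomp_inv RSp); auto using Q_vH.
      change (Rmult (Dg RSp (vH x) (vH y)) dinv = 1). unfold dinv. field. exact HD.
    + unfold m1, m2, m3.
      generalize ((lam1 RSp) (vH x) (vH y) (vH a)) ((lam2 RSp) (vH x) (vH y) (vH a))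
        ((lam3 RSp) (vH x) (vH y) (vH a)) (RS.cr (vH x) (vH y)) (vH x) (vH y) (rH a).
      intros l1 l2 l3 W X Y r.
      apply vext; cbn [gvadd gvsc glc3 gvz v1 v2 v3 v4 v5 v6 v7];
        unfold RS.kadd, RS.kmul, RS.kz, RS.K; ring.
Qed.

Lemma unique_RH phi psi : sharp RH phi -> sharp RH psi -> phi x = psi x -> phi y = psi y ->
  forall a, phi a = psi a.
Proof.
  intros Hp Hq Ex Ey a.
  pose proof (sharp_one_RH _ Hp) as O1. pose proof (sharp_one_RH _ Hq) as O2.
  destruct Hp as (Pa & Ps & Pm & _). destruct Hq as (Qa & Qs & Qm & _).
  cbv [aadd ascale amul oscale incF] in *.
  rewrite (decomp_H a).
  repeat (first [rewrite Ps | rewrite Pa]). rewrite Pm.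
  repeat (first [rewrite Qs | rewrite Qa]). rewrite Qm.
  rewrite O1, O2, Ex, Ey. reflexivity.
Qed.
End Uniq.

Lemma div_R y a x b : y * a = x * b -> a <> 0 -> y = x * (b / a).
Proof. intros H Ha. apply (Rmult_eq_reg_r a); auto. rewrite H. field. auto. Qed.

Lemma vsc_div_R (X Y : V R) a b : gvsc RS.kmul Y a = gvsc RS.kmul X b -> a <> 0 ->
  Y = gvsc RS.kmul X (b / a).
Proof.
  destruct X, Y. unfold gvsc, RS.kmul. cbn. intros H Ha. injection H; intros.
  apply vext; cbn; apply div_R; auto.
Qed.

Lemma Dg_sym_R X Y : (Dg RSp) X Y = RS.h X X * RS.h Y Y - RS.h X Y * RS.h X Y.
Proof. unfold Dg. rewrite (h_sym RSp X Y). reflexivity. Qed.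

Lemma h_vz_R : @eq R (RS.h (gvz RS.kz) (gvz RS.kz)) 0.
Proof. unfold RS.h, gvz, RS.kz, RS.K. cbn. ring. Qed.

Section Degen.
Variables (x y : Hq) (u v : Oc).
Hypotheses (rx : rH x = 0) (ry : rH y = 0) (ru : rO u = 0) (rv : rO v = 0).
Hypothesis Gxx : RS.h (vecO u) (vecO u) = RS.h (vH x) (vH x).
Hypothesis Gyy : RS.h (vecO v) (vecO v) = RS.h (vH y) (vH y).
Hypothesis Gxy : RS.h (vecO u) (vecO v) = RS.h (vH x) (vH y).
Hypothesis Hu : RS.h (vecO u) (vecO u) <> 0.
Hypothesis Hv : RS.h (vecO v) (vecO v) <> 0.
Hypothesis HD0 : (Dg RSp) (vH x) (vH y) = 0.

Lemma degen_RH : line_set RH x u = line_set RH y v.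
Proof.
  assert (HDU : (Dg RSp) (vecO u) (vecO v) = RS.kz).
  { rewrite Dg_sym_R, Gxx, Gyy, Gxy, <- Dg_sym_R. exact HD0. }
  pose proof ((cs RSp) (vH x) (vH y) I I HD0) as C1.
  pose proof ((cs RSp) (vecO u) (vecO v) I I HDU) as C2.
  change (h RSp) with RS.h in C1, C2. change (kmul RSp) with RS.kmul in C1, C2.
  assert (Hxx : RS.h (vH x) (vH x) <> 0) by (rewrite <- Gxx; exact Hu).
  apply vsc_div_R in C1; auto. apply vsc_div_R in C2; auto.
  rewrite Gxx, Gxy in C2.
  match type of C1 with _ = gvsc _ _ ?T => set (t := T) in * end.
  assert (Ey : y = Hmul x (RtoH t)).
  { apply hq_eq. rewrite rH_sc, rx, ry; ring. rewrite vH_sc. exact C1. }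
  assert (Ev : v = Omul u (RtoO t)).
  { apply oc_eq. rewrite Omul_RtoO_re, ru, rv; ring. rewrite Omul_RtoO_vec. exact C2. }
  assert (Ht : t <> 0).
  { intro Z. apply Hv. rewrite C2, Z, RS.h_scl, RS.h_scr. unfold RS.kmul, RS.kconj, RS.K. ring. }
  apply functional_extensionality; intro a; apply functional_extensionality; intro b.
  apply propositional_extensionality. unfold line_set. cbv [ascale oscale incF fzero Fty Aty] in *.
  rewrite Ey, Ev. split.
  - intros (s & Hs & Ha & Hb). exists (s / t). split.
    + intro Z. apply Hs. apply (Rmult_eq_reg_r (/ t)). rewrite Rmult_0_l. exact Z.
      apply Rinv_neq_0_compat; auto.
    + rewrite H_assoc_R, O_assoc_R. replace (t * (s / t)) with s by (field; auto). auto.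
  - intros (s & Hs & Ha & Hb). exists (t * s). split.
    + intro Z. apply Rmult_integral in Z. destruct Z; auto.
    + rewrite H_assoc_R in Ha. rewrite O_assoc_R in Hb. auto.
Qed.
End Degen.

Lemma point_RH p : is_point RH p -> rH p = 0 /\ vH p <> gvz RS.kz.
Proof.
  intros (Hp & Hnz). apply PuA_RH in Hp. split; auto.
  intro Z. apply Hnz. cbv [emb]. apply oc_eq; [exact Hp | exact Z].
Qed.

Lemma ptset_RH p q : is_point RH p -> is_point RH q -> pt_set RH p <> pt_set RH q ->
  (Dg RSp) (vH p) (vH q) <> 0.
Proof.
  intros Pp Pq Hne HD0. apply point_RH in Pp as (rp & np). apply point_RH in Pq as (rq & nq).
  apply Hne. pose proof ((cs RSp) (vH p) (vH q) I I HD0) as C1.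
  change (h RSp) with RS.h in C1. change (kmul RSp) with RS.kmul in C1.
  assert (Hpp : RS.h (vH p) (vH p) <> 0).
  { intro Z. apply np. apply RS.h_pos; [exact I | exact Z]. }
  apply vsc_div_R in C1; auto.
  match type of C1 with _ = gvsc _ _ ?T => set (t := T) in * end.
  assert (Eq : q = Hmul p (RtoH t)).
  { apply hq_eq. rewrite rH_sc, rp, rq; ring. rewrite vH_sc. exact C1. }
  assert (Ht : t <> 0).
  { intro Z. apply nq. rewrite C1, Z. unfold gvsc, gvz, RS.kmul, RS.kz. apply vext; cbn; ring. }
  apply functional_extensionality; intro a.
  apply propositional_extensionality. unfold pt_set. cbv [ascale Fty Aty] in *. rewrite Eq. split.
  - intros (s & Ha). exists (s / t). rewrite H_assoc_R. replace (t * (s / t)) with s by (field; auto).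
    auto.
  - intros (s & Ha). exists (t * s). rewrite H_assoc_R in Ha. auto.
Qed.

Theorem main_RH :
  (forall (x y : Aty RH) (u v : Oc),
     is_line RH x u -> is_line RH y v ->
     line_set RH x u <> line_set RH y v ->
     ((exists phi : Aty RH -> Oc,
         sharp RH phi /\ line_plane_inc RH x u phi /\ line_plane_inc RH y v phi)
        <-> ipA RH x y = ip RH u v) /\
     (ipA RH x y = ip RH u v ->
        exists! phi : Aty RH -> Oc,
          sharp RH phi /\ phi x = u /\ phi y = v) /\
     (ipA RH x y = ip RH u v ->
        exists! phi : Aty RH -> Oc,
          sharp RH phi /\ line_plane_inc RH x u phi /\ line_plane_inc RH y v phi))
  /\
  (forall (x y : Aty RH) (u v : Oc) (p q : Aty RH),
     is_line RH x u -> is_line RH y v ->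
     is_point RH p -> is_point RH q -> pt_set RH p <> pt_set RH q ->
     pt_line_inc RH p x u -> pt_line_inc RH p y v ->
     pt_line_inc RH q x u -> pt_line_inc RH q y v ->
     forall r : Aty RH, is_point RH r ->
       (pt_line_inc RH r x u <-> pt_line_inc RH r y v)).
Proof.
  split.
  - intros x y u v Lx Ly Hne.
    destruct (line_RH _ _ Lx) as (rx & ru & Gxx & Hu).
    destruct (line_RH _ _ Ly) as (ry & rv & Gyy & Hv).
    assert (Key : ipA RH x y = ip RH u v ->
      exists! phi : Aty RH -> Oc, sharp RH phi /\ phi x = u /\ phi y = v).
    { intro Hip.
      assert (Gxy : RS.h (vecO u) (vecO v) = RS.h (vH x) (vH y)).
      { rewrite <- ip_RH, <- ipA_RH; auto. }
      assert (HD : (Dg RSp) (vH x) (vH y) <> 0).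
      { intro HD0. apply Hne. apply degen_RH; auto. }
      exists (phi0 x y u v). split.
      - split; [apply phi0_sharp; auto | split; [apply phi0_x | apply phi0_y]; auto].
      - intros psi (Hs & Hx & Hy). apply functional_extensionality.
        apply (unique_RH x y rx ry); auto using phi0_sharp.
        + rewrite Hx. apply phi0_x; auto.
        + rewrite Hy. apply phi0_y; auto. }
    split; [|split].
    + split.
      * intros (phi & (_ & _ & _ & Hi) & Hx & Hy). unfold line_plane_inc in *.
        rewrite <- Hi, Hx, Hy. reflexivity.
      * intro Hip. destruct (Key Hip) as (phi & (Hs & Hx & Hy) & _). exists phi. auto.
    + exact Key.
    + intro Hip. exact (Key Hip).
  - intros x y u v p q Lx Ly Pp Pq Hne Ipx Ipy Iqx Iqy r Pr.
    destruct (line_RH _ _ Lx) as (rx & ru & Gxx & Hu).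
    destruct (line_RH _ _ Ly) as (ry & rv & Gyy & Hv).
    pose proof (ptset_RH _ _ Pp Pq Hne) as HD.
    apply point_RH in Pp as (rp & np). apply point_RH in Pq as (rq & nq).
    apply point_RH in Pr as (rr & nr).
    unfold pt_line_inc in *. cbv [fzero] in *.
    rewrite ipA_RH in Ipx, Ipy, Iqx, Iqy by auto. rewrite !ipA_RH by auto.
    assert (nx : vH x <> gvz RS.kz).
    { intro Z. apply Hu. rewrite Gxx, Z. apply h_vz_R. }
    assert (ny : vH y <> gvz RS.kz).
    { intro Z. apply Hv. rewrite Gyy, Z. apply h_vz_R. }
    apply ((perp_equiv RSp) (vH p) (vH q) (Q_vH p) (Q_vH q) HD); auto using Q_vH.
Qed.

Open Scope R_scope.

Ltac dall2 := repeat match goal with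
  | a : V _ |- _ => destruct a
  | z : Oc |- _ => destruct z
  | z : Hq |- _ => destruct z
  | z : Cx |- _ => destruct z
  | z : (_ * _)%type |- _ => destruct z
  end.

Definition Cinv (z : Cx) : Cx :=
  (fst z / (fst z * fst z + snd z * snd z), - snd z / (fst z * fst z + snd z * snd z)).

Lemma CKth : ring_theory Czero Cone Cadd Cmul (fun a b => Cadd a (Copp b)) Copp eq.
Proof. constructor; intros; repeat match goal with z : Cx |- _ => destruct z end;
  unfold Czero, Cone, Cadd, Cmul, Copp; cbn; f_equal; ring. Qed.
Add Ring Cring : CKth.
Lemma Cconj_add a b : Cconj (Cadd a b) = Cadd (Cconj a) (Cconj b).
Proof. destruct a, b; unfold Cconj, Cadd; cbn; f_equal; ring. Qed.
Lemma Cconj_mul a b : Cconj (Cmul a b) = Cmul (Cconj a) (Cconj b).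
Proof. destruct a, b; unfold Cconj, Cmul; cbn; f_equal; ring. Qed.
Lemma Cconj_opp a : Cconj (Copp a) = Copp (Cconj a).
Proof. destruct a; unfold Cconj, Copp; cbn; f_equal; ring. Qed.
Lemma Cconj_conj a : Cconj (Cconj a) = a.
Proof. destruct a; unfold Cconj; cbn; f_equal; ring. Qed.
Lemma Cconj_zero : Cconj Czero = Czero.
Proof. unfold Cconj, Czero; cbn; f_equal; ring. Qed.
#[global] Hint Rewrite Cconj_add Cconj_mul Cconj_opp Cconj_conj Cconj_zero : cconj.

Module CS.
Definition K := Cx.
Definition kz : K := Czero.
Definition ko : K := Cone.
Definition kadd : K -> K -> K := Cadd.
Definition kmul : K -> K -> K := Cmul.
Definition kopp : K -> K := Copp.
Definition kconj : K -> K := Cconj.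
Definition kinv : K -> K := Cinv.
Ltac cu := unfold K, kz, ko, kadd, kmul, kopp, kconj, kinv, Cinv, Czero, Cone, Cadd, Cmul, Copp, Cconj in *.
Ltac cr1 := intros; cu; dall2; cbn in *; f_equal; ring.
Lemma Kth : ring_theory kz ko kadd kmul (fun a b => kadd a (kopp b)) kopp eq.
Proof. constructor; cr1. Qed.
Lemma ko_nz : ko <> kz.
Proof. cu. intro H. injection H. lra. Qed.
Lemma kinv_r : forall a, a <> kz -> kmul a (kinv a) = ko.
Proof.
  intros a Ha. cu. dall2. cbn.
  assert (r * r + r0 * r0 <> 0).
  { intro H. apply Ha. assert (r = 0) by nra. assert (r0 = 0) by nra. subst; reflexivity. }
  f_equal; field; auto.
Qed.
Lemma conj_add : forall a b, kconj (kadd a b) = kadd (kconj a) (kconj b). Proof. cr1. Qed.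
Lemma conj_mul : forall a b, kconj (kmul a b) = kmul (kconj a) (kconj b). Proof. cr1. Qed.
Lemma conj_invol : forall a, kconj (kconj a) = a. Proof. cr1. Qed.
Lemma conj_one : kconj ko = ko. Proof. cr1. Qed.
Definition h (A B : V K) : K :=
  Cadd (Cadd (Cmul (Cconj (v1 A)) (v1 B)) (Cmul (Cconj (v2 A)) (v2 B))) (Cmul (Cconj (v3 A)) (v3 B)).
Definition cr (A B : V K) : V K :=
  mkV (Cconj (Cadd (Cmul (v2 A) (v3 B)) (Copp (Cmul (v3 A) (v2 B)))))
      (Cconj (Cadd (Cmul (v3 A) (v1 B)) (Copp (Cmul (v1 A) (v3 B)))))
      (Cconj (Cadd (Cmul (v1 A) (v2 B)) (Copp (Cmul (v2 A) (v1 B)))))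
      Czero Czero Czero Czero.
Definition P (A : V K) : Prop := v4 A = Czero /\ v5 A = Czero /\ v6 A = Czero /\ v7 A = Czero.
Definition Q := P.

Ltac cv := unfold K, kz, ko, kadd, kmul, kopp, kconj, kinv in *.
Ltac sv := intros; unfold h, cr, gvadd, gvsc, gvz, glc3 in *; cv;
  repeat match goal with a : V _ |- _ => destruct a end; cbn in *.
Ltac svr := sv; try (apply vext; cbn); autorewrite with cconj; ring.
Ltac pq := unfold Q, P in *;
  repeat match goal with H : _ /\ _ |- _ => destruct H end;
  cv; repeat match goal with a : V _ |- _ => destruct a end; cbn in *; subst.

Lemma h_addl : forall a b c, h (gvadd kadd a b) c = kadd (h a c) (h b c). Proof. svr. Qed.
Lemma h_addr : forall a b c, h a (gvadd kadd b c) = kadd (h a b) (h a c). Proof. svr. Qed.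
Lemma h_scl : forall a b k, h (gvsc kmul a k) b = kmul (kconj k) (h a b). Proof. svr. Qed.
Lemma h_scr : forall a b k, h a (gvsc kmul b k) = kmul (h a b) k. Proof. svr. Qed.
Lemma h_sym : forall a b, h b a = kconj (h a b). Proof. svr. Qed.
Lemma cr_addl : forall a b c, cr (gvadd kadd a b) c = gvadd kadd (cr a c) (cr b c). Proof. svr. Qed.
Lemma cr_addr : forall a b c, cr a (gvadd kadd b c) = gvadd kadd (cr a b) (cr a c). Proof. svr. Qed.
Lemma cr_scl : forall a b k, cr (gvsc kmul a k) b = gvsc kmul (cr a b) (kconj k). Proof. svr. Qed.
Lemma cr_scr : forall a b k, cr a (gvsc kmul b k) = gvsc kmul (cr a b) (kconj k). Proof. svr. Qed.
Lemma P_add : forall a b, P a -> P b -> P (gvadd kadd a b).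
Proof. intros. pq. unfold P, gvadd, gvsc; cbn; repeat split; ring. Qed.
Lemma P_sc : forall a k, P a -> P (gvsc kmul a k).
Proof. intros. pq. unfold P, gvadd, gvsc; cbn; repeat split; ring. Qed.
Lemma P_cr : forall a b, P a -> P b -> P (cr a b).
Proof. intros. unfold P, cr. cbn. repeat split. Qed.
Lemma Q_add : forall a b, Q a -> Q b -> Q (gvadd kadd a b). Proof. exact P_add. Qed.
Lemma Q_sc : forall a k, Q a -> Q (gvsc kmul a k). Proof. exact P_sc. Qed.
Lemma Q_cr : forall a b, Q a -> Q b -> Q (cr a b). Proof. exact P_cr. Qed.
Lemma Q_P : forall a, Q a -> P a. Proof. auto. Qed.
Lemma cr_self : forall a, P a -> cr a a = gvz kz.
Proof. intros. pq. sv. apply vext; cbn; autorewrite with cconj; ring. Qed.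
Lemma cr_anti : forall a b, P a -> P b -> cr b a = gvsc kmul (cr a b) (kopp ko).
Proof. intros. pq. sv. apply vext; cbn; autorewrite with cconj; ring. Qed.
Lemma cr_cr : forall a b, P a -> P b ->
  cr a (cr a b) = gvadd kadd (gvsc kmul a (h a b)) (gvsc kmul b (kopp (h a a))).
Proof. intros. pq. sv. apply vext; cbn; autorewrite with cconj; ring. Qed.
Lemma h_cr1 : forall a b, P a -> P b -> h a (cr a b) = kz. Proof. svr. Qed.
Lemma h_cr2 : forall a b, P a -> P b -> h b (cr a b) = kz. Proof. svr. Qed.
Lemma h_crcr : forall a b, P a -> P b ->
  h (cr a b) (cr a b) = kadd (kmul (h a a) (h b b)) (kopp (kmul (h a b) (h b a))).
Proof. svr. Qed.
Lemma h_pos : forall a, P a -> h a a = kz -> a = gvz kz.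
Proof.
  intros a Pa H. destruct a as [[a1 b1] [a2 b2] [a3 b3] w4 w5 w6 w7]. pq. sv. cu.
  cbn in H.
  injection H; intros H1 H2. cbn in *. apply vext; cbn; try reflexivity; f_equal; nra.
Qed.
Lemma decomp : forall a p q, Q a -> Q p -> Q q ->
  gvsc kmul a (kadd (kmul (h p p) (h q q)) (kopp (kmul (h p q) (h q p)))) =
  glc3 kadd kmul (kadd (kmul (h q q) (h p a)) (kopp (kmul (h p q) (h q a))))
    (kadd (kmul (h p p) (h q a)) (kopp (kmul (h q p) (h p a)))) (h (cr p q) a) p q (cr p q).
Proof.
  intros. pq. sv. apply vext; cbn; autorewrite with cconj; ring.
Qed.
End CS.

Definition CSp : SPACE := mkSPACE CS.K CS.kz CS.ko CS.kadd CS.kmul CS.kopp CS.kconj CS.kinv CS.h CS.cr CS.P CS.Q CS.Kth CS.ko_nz CS.kinv_r CS.conj_add CS.conj_mul CS.conj_invol CS.conj_one CS.h_addl CS.h_addr CS.h_scl CS.h_scr CS.h_sym CS.cr_addl CS.cr_addr CS.cr_scl CS.cr_scr CS.P_add CS.P_sc CS.P_cr CS.Q_add CS.Q_sc CS.Q_cr CS.Q_P CS.cr_self CS.cr_anti CS.cr_cr CS.h_cr1 CS.h_cr2 CS.h_crcr CS.h_pos CS.decomp.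


Open Scope R_scope.

Definition c0 (o : Oc) : Cx := fst (fst o).
Definition vecC (o : Oc) : V Cx :=
  mkV (Cconj (snd (fst o))) (Cconj (fst (snd o))) (snd (snd o)) Czero Czero Czero Czero.
Definition ofC (c : Cx) (A : V Cx) : Oc := ((c, Cconj (v1 A)), (Cconj (v2 A), v3 A)).

Ltac cun := cbv beta iota zeta delta [CtoO Ozero Hzero c0 vecC ofC Oadd Omul Oconj Oopp
  Hadd Hmul Hopp Hconj Cadd Cmul Copp Cconj Czero Cone realip ip gvadd gvsc gvz CS.h CS.cr CS.kadd
  CS.kmul CS.kz CS.K CS.P fst snd v1 v2 v3 v4 v5 v6 v7] in *.
Ltac pf2 := repeat match goal with |- (_, _) = (_, _) => f_equal end.
Ltac dallC := repeat match goal with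
  | a : V _ |- _ => destruct a
  | z : Oc |- _ => destruct z
  | z : Hq |- _ => destruct z
  | z : Cx |- _ => destruct z
  | z : CS.K |- _ => destruct z
  | z : (_ * _)%type |- _ => destruct z
  end.

Lemma co_eq a b : c0 a = c0 b -> vecC a = vecC b -> a = b.
Proof.
  dallC. cun. intros H1 H2. injection H2; intros.
  repeat match goal with H : (_, _) = (_, _) |- _ => injection H; clear H; intros end.
  pf2; lra.
Qed.

Lemma c0_ofC c A : c0 (ofC c A) = c. Proof. reflexivity. Qed.
Lemma vecC_ofC c A : CS.P A -> vecC (ofC c A) = A.
Proof.
  intros (H4 & H5 & H6 & H7). destruct A. cbn in *. subst. unfold vecC, ofC. cbn.
  rewrite !Cconj_conj. reflexivity.
Qed.
Lemma P_vecC a : CS.P (vecC a). Proof. unfold CS.P. cbn. auto. Qed.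

Lemma ip_dec a b : ip CO a b = Cadd (Cmul (Cconj (c0 a)) (c0 b)) (CS.h (vecC a) (vecC b)).
Proof. dallC. cun. pf2; ring. Qed.

Lemma Omul_c0 a b : c0 (Omul a b) = Cadd (Cmul (c0 a) (c0 b)) (Copp (CS.h (vecC a) (vecC b))).
Proof. dallC. cun. pf2; ring. Qed.

Lemma Omul_vecC a b : vecC (Omul a b) =
  gvadd CS.kadd (gvadd CS.kadd (gvsc CS.kmul (vecC a) (c0 b)) (gvsc CS.kmul (vecC b) (Cconj (c0 a))))
    (CS.cr (vecC a) (vecC b)).
Proof. dallC. cun. apply vext; cun; pf2; ring. Qed.

Lemma Oadd_c0 a b : c0 (Oadd a b) = Cadd (c0 a) (c0 b).
Proof. dallC. cun. pf2; ring. Qed.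
Lemma Oadd_vecC a b : vecC (Oadd a b) = gvadd CS.kadd (vecC a) (vecC b).
Proof. dallC. cun. apply vext; cun; pf2; ring. Qed.

Lemma OmulC_c0 a t : c0 (Omul a (CtoO t)) = Cmul (c0 a) t.
Proof. dallC. cun. pf2; ring. Qed.
Lemma OmulC_vecC a t : vecC (Omul a (CtoO t)) = gvsc CS.kmul (vecC a) t.
Proof. dallC. cun. apply vext; cun; pf2; ring. Qed.

Lemma ip_self a : c0 a = Czero -> ip CO a a = (realip a a, 0).
Proof. dallC. cun. intro H. injection H; intros; subst. pf2; ring. Qed.

Lemma O_assoc_C u t s : Omul (Omul u (CtoO t)) (CtoO s) = Omul u (CtoO (Cmul t s)).
Proof. dallC. cun. pf2; ring. Qed.
Lemma CtoO_one_mul c : Omul (CtoO Cone) (CtoO c) = CtoO c.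
Proof. dallC. cun. pf2; ring. Qed.
Lemma c0_one : c0 (CtoO Cone) = Cone. Proof. reflexivity. Qed.
Lemma vecC_one : vecC (CtoO Cone) = gvz CS.kz.
Proof. cun. apply vext; cun; pf2; ring. Qed.
Lemma ip_one : ip CO (CtoO Cone) (CtoO Cone) = Cone.
Proof. cun. pf2; ring. Qed.
Lemma vecC_zero : vecC Ozero = gvz CS.kz.
Proof. cun. apply vext; cun; pf2; ring. Qed.
Lemma c0_zero : c0 Ozero = Czero. Proof. reflexivity. Qed.

Open Scope R_scope.

Ltac uc := unfold CS.kadd, CS.kmul, CS.kz, CS.ko, CS.kopp, CS.kconj, CS.kinv, CS.K in *.

Ltac normC := repeat first [ change (h CSp) with CS.h in * | change (cr CSp) with CS.cr in *
  | change (kmul CSp) with CS.kmul in * | change (kadd CSp) with CS.kadd in *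
  | change (kinv CSp) with CS.kinv in * | change (kz CSp) with CS.kz in * | change (ko CSp) with CS.ko in *
  | change (K CSp) with CS.K in * | change (kconj CSp) with CS.kconj in * | change (kopp CSp) with CS.kopp in *].

Lemma Q_vecC a : Q CSp (vecC a). Proof. apply P_vecC. Qed.
Lemma P_vecC' a : P CSp (vecC a). Proof. apply P_vecC. Qed.

Lemma PuO_CO u : PuO CO u -> c0 u = Czero.
Proof.
  intro H. pose proof (H Cone) as H1. pose proof (H (0, 1)) as H2. cbv [incF] in H1, H2.
  destruct u as [[[a b] ?] ?]. cun. pf2; lra.
Qed.
Lemma PuA_CO x : PuA CO x -> c0 x = Czero.
Proof. apply PuO_CO. Qed.

Lemma ipA_CO a b : c0 a = Czero -> @eq Cx (ipA CO a b) (CS.h (vecC a) (vecC b)).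
Proof. intro H. unfold ipA. cbv [emb]. rewrite ip_dec, H, Cconj_zero. uc. unfold CS.h. ring. Qed.
Lemma ip_CO a b : c0 a = Czero -> @eq Cx (ip CO a b) (CS.h (vecC a) (vecC b)).
Proof. intro H. rewrite ip_dec, H, Cconj_zero. unfold CS.h. ring. Qed.

Lemma line_CO x u : is_line CO x u ->
  c0 x = Czero /\ c0 u = Czero /\ CS.h (vecC u) (vecC u) = CS.h (vecC x) (vecC x) /\
  CS.h (vecC u) (vecC u) <> Czero.
Proof.
  intros (Hx & Hu & Hn & Hnz). apply PuA_CO in Hx. apply PuO_CO in Hu.
  cbv [emb onorm] in Hn, Hnz.
  apply sqrt_inj in Hn; try apply realip_pos.
  rewrite <- !ip_CO by auto. rewrite !ip_self by auto. rewrite Hn.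
  repeat split; auto.
  intro C. injection C. intro Z. apply Hnz. rewrite Z. apply sqrt_0.
Qed.

Section Constr.
Variables (x y : Oc) (u v : Oc).
Hypotheses (rx : c0 x = Czero) (ry : c0 y = Czero) (ru : c0 u = Czero) (rv : c0 v = Czero).
Hypothesis Gxx : CS.h (vecC u) (vecC u) = CS.h (vecC x) (vecC x).
Hypothesis Gyy : CS.h (vecC v) (vecC v) = CS.h (vecC y) (vecC y).
Hypothesis Gxy : CS.h (vecC u) (vecC v) = CS.h (vecC x) (vecC y).
Hypothesis HD : (Dg CSp) (vecC x) (vecC y) <> CS.kz.

Let dinv := CS.kinv ((Dg CSp) (vecC x) (vecC y)).
Lemma HdinvC : kmul CSp ((Dg CSp) (vecC x) (vecC y)) dinv = ko CSp.
Proof. apply CS.kinv_r. exact HD. Qed.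

Definition LmC := (L CSp) (vecC x) (vecC y) (vecC u) (vecC v) dinv.
Definition phiC (a : Oc) : Oc := ofC (c0 a) (LmC (vecC a)).

Lemma LmC_P a : CS.P (LmC a).
Proof. apply (L_P CSp); apply P_vecC. Qed.
Lemma LmC_unit a b : CS.h (LmC (vecC a)) (LmC (vecC b)) = CS.h (vecC a) (vecC b).
Proof. apply (L_unit CSp); auto using Q_vecC, P_vecC', HdinvC. Qed.
Lemma LmC_cr a b : LmC (CS.cr (vecC a) (vecC b)) = CS.cr (LmC (vecC a)) (LmC (vecC b)).
Proof. apply (L_cr CSp); auto using Q_vecC, P_vecC', HdinvC. Qed.
Lemma vecC_phiC a : vecC (phiC a) = LmC (vecC a).
Proof. unfold phiC. apply vecC_ofC, LmC_P. Qed.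
Lemma c0_phiC a : c0 (phiC a) = c0 a.
Proof. reflexivity. Qed.

Lemma phiC_sharp : sharp CO phiC.
Proof.
  unfold sharp. cbv [aadd ascale amul oscale ipA incF emb].
  split; [|split; [|split]]; intros a b.
  - apply co_eq.
    + rewrite Oadd_c0, !c0_phiC, Oadd_c0. reflexivity.
    + rewrite Oadd_vecC, !vecC_phiC, Oadd_vecC. apply (L_add CSp).
  - apply co_eq.
    + rewrite !OmulC_c0, !c0_phiC, OmulC_c0. reflexivity.
    + rewrite OmulC_vecC, !vecC_phiC, OmulC_vecC. apply (L_sc CSp).
  - apply co_eq.
    + rewrite Omul_c0, !c0_phiC, !vecC_phiC, Omul_c0, LmC_unit. reflexivity.
    + rewrite Omul_vecC, !vecC_phiC, !c0_phiC, Omul_vecC. unfold LmC.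
      rewrite !(L_add CSp), !(L_sc CSp). fold LmC. rewrite LmC_cr. reflexivity.
  - rewrite !ip_dec, !c0_phiC, !vecC_phiC, LmC_unit. reflexivity.
Qed.

Lemma phiC_x : phiC x = u.
Proof.
  apply co_eq.
  - rewrite c0_phiC, rx, ru. reflexivity.
  - rewrite vecC_phiC. apply (L_p CSp); auto using Q_vecC, HdinvC.
Qed.
Lemma phiC_y : phiC y = v.
Proof.
  apply co_eq.
  - rewrite c0_phiC, ry, rv. reflexivity.
  - rewrite vecC_phiC. apply (L_q CSp); auto using Q_vecC, HdinvC.
Qed.
End Constr.

Lemma sharp_one_CO phi : sharp CO phi -> phi (CtoO Cone) = CtoO Cone.
Proof.
  intros (_ & _ & Hm & Hi). cbv [amul ip ipA emb] in Hm, Hi.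
  set (e := phi (CtoO Cone)).
  assert (E1 : Omul e e = e) by (unfold e; rewrite <- Hm, CtoO_one_mul; reflexivity).
  assert (E2 : realip e e = 1).
  { change (realip e e) with (fst (ip CO e e)). unfold e. cbv [ip]. rewrite Hi.
    change (fst (ip CO (CtoO Cone) (CtoO Cone)) = 1). rewrite ip_one. reflexivity. }
  assert (E3 : Omul e (Oadd e (RtoO (-1))) = Ozero) by (rewrite O_distr, E1; apply O_neg).
  change (CtoO Cone) with (RtoO 1).
  apply O_sub_zero, realip_zero.
  assert (E4 := compo e (Oadd e (RtoO (-1)))). rewrite E3, E2 in E4.
  rewrite <- (Rmult_1_l (realip _ _)), <- E4. unfold Ozero, Hzero, Czero, realip. cbn. ring.
Qed.

Section Uniq.
Variables (x y : Oc).
Hypotheses (rx : c0 x = Czero) (ry : c0 y = Czero).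
Hypothesis HD : (Dg CSp) (vecC x) (vecC y) <> CS.kz.
Let dinv := CS.kinv ((Dg CSp) (vecC x) (vecC y)).

Lemma decomp_O a :
  let c := CS.h (vecC x) (vecC y) in
  let m1 := Cmul ((lam1 CSp) (vecC x) (vecC y) (vecC a)) dinv in
  let m2 := Cmul ((lam2 CSp) (vecC x) (vecC y) (vecC a)) dinv in
  let m3 := Cmul ((lam3 CSp) (vecC x) (vecC y) (vecC a)) dinv in
  a = Oadd (Oadd (Oadd (Omul (CtoO Cone) (CtoO (c0 a))) (Omul x (CtoO m1))) (Omul y (CtoO m2)))
        (Omul (Oadd (Omul x y) (Omul (CtoO Cone) (CtoO c))) (CtoO m3)).
Proof.
  intros c m1 m2 m3. apply co_eq.
  - rewrite !Oadd_c0, !OmulC_c0, Oadd_c0, Omul_c0, !OmulC_c0, rx, ry, c0_one. unfold c. ring.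
  - rewrite !Oadd_vecC, !OmulC_vecC, Oadd_vecC, Omul_vecC, OmulC_vecC, rx, ry, vecC_one.
    transitivity (gvsc CS.kmul (glc3 CS.kadd CS.kmul ((lam1 CSp) (vecC x) (vecC y) (vecC a))
      ((lam2 CSp) (vecC x) (vecC y) (vecC a)) ((lam3 CSp) (vecC x) (vecC y) (vecC a)) (vecC x) (vecC y)
      (CS.cr (vecC x) (vecC y))) dinv).
    + apply (decomp_inv CSp); auto using Q_vecC. apply CS.kinv_r. exact HD.
    + unfold m1, m2, m3.
      generalize ((lam1 CSp) (vecC x) (vecC y) (vecC a)) ((lam2 CSp) (vecC x) (vecC y) (vecC a))
        ((lam3 CSp) (vecC x) (vecC y) (vecC a)) (CS.cr (vecC x) (vecC y)) (vecC x) (vecC y) (c0 a).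
      intros l1 l2 l3 W X Y r. rewrite Cconj_zero.
      apply vext; cbn [gvadd gvsc glc3 gvz v1 v2 v3 v4 v5 v6 v7]; uc; ring.
Qed.

Lemma unique_CO phi psi : sharp CO phi -> sharp CO psi -> phi x = psi x -> phi y = psi y ->
  forall a, phi a = psi a.
Proof.
  intros Hp Hq Ex Ey a.
  pose proof (sharp_one_CO _ Hp) as O1. pose proof (sharp_one_CO _ Hq) as O2.
  destruct Hp as (Pa & Ps & Pm & _). destruct Hq as (Qa & Qs & Qm & _).
  cbv [aadd ascale amul oscale incF] in *.
  rewrite (decomp_O a).
  repeat (first [rewrite Ps | rewrite Pa]). rewrite Pm.
  repeat (first [rewrite Qs | rewrite Qa]). rewrite Qm.
  rewrite O1, O2, Ex, Ey. reflexivity.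
Qed.
End Uniq.

Lemma h_vz_C : @eq Cx (CS.h (gvz CS.kz) (gvz CS.kz)) Czero.
Proof. unfold CS.h, gvz, CS.kz. cbn. rewrite !Cconj_zero. ring. Qed.

Lemma Cinv_l t : t <> Czero -> Cmul t (Cinv t) = Cone.
Proof. apply CS.kinv_r. Qed.

Section DegenC.
Variables (x y : Oc) (u v : Oc).
Hypotheses (rx : c0 x = Czero) (ry : c0 y = Czero) (ru : c0 u = Czero) (rv : c0 v = Czero).
Hypothesis Gxx : CS.h (vecC u) (vecC u) = CS.h (vecC x) (vecC x).
Hypothesis Gyy : CS.h (vecC v) (vecC v) = CS.h (vecC y) (vecC y).
Hypothesis Gxy : CS.h (vecC u) (vecC v) = CS.h (vecC x) (vecC y).
Hypothesis Hu : CS.h (vecC u) (vecC u) <> Czero.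
Hypothesis Hv : CS.h (vecC v) (vecC v) <> Czero.
Hypothesis HD0 : (Dg CSp) (vecC x) (vecC y) = CS.kz.

Lemma degen_CO : line_set CO x u = line_set CO y v.
Proof.
  assert (HDU : (Dg CSp) (vecC u) (vecC v) = CS.kz).
  { rewrite ((Dg_gram CSp) _ _ (vecC x) (vecC y)); auto. }
  pose proof ((cs CSp) (vecC x) (vecC y) (P_vecC x) (P_vecC y) HD0) as C1.
  pose proof ((cs CSp) (vecC u) (vecC v) (P_vecC u) (P_vecC v) HDU) as C2.
  assert (Hxx : CS.h (vecC x) (vecC x) <> Czero) by (rewrite <- Gxx; exact Hu).
  apply (vsc_div CSp) in C1; auto. apply (vsc_div CSp) in C2; auto.
  normC. rewrite Gxx, Gxy in C2.
  match type of C1 with _ = gvsc _ _ ?T => set (t := T) in * end.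
  assert (Ey : y = Omul x (CtoO t)).
  { apply co_eq. rewrite OmulC_c0, rx, ry. ring.
    rewrite OmulC_vecC. exact C1. }
  assert (Ev : v = Omul u (CtoO t)).
  { apply co_eq. rewrite OmulC_c0, ru, rv. ring.
    rewrite OmulC_vecC. exact C2. }
  assert (Ht : t <> Czero).
  { intro Z. apply Hv. rewrite C2, Z, CS.h_scl, CS.h_scr. uc. rewrite Cconj_zero. ring. }
  apply functional_extensionality; intro a; apply functional_extensionality; intro b.
  apply propositional_extensionality. unfold line_set. cbv [ascale oscale incF fzero Fty Aty] in *.
  rewrite Ey, Ev. split.
  - intros (s & Hs & Ha & Hb). exists (Cmul s (Cinv t)). split.
    + intro Z. apply Hs. transitivity (Cmul (Cmul s (Cinv t)) t).
      * transitivity (Cmul s (Cmul t (Cinv t))); [rewrite Cinv_l by auto; ring | ring].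
      * rewrite Z. ring.
    + rewrite O_assoc_C, O_assoc_C.
      replace (Cmul t (Cmul s (Cinv t))) with s. auto.
      transitivity (Cmul s (Cmul t (Cinv t))); [rewrite Cinv_l by auto; ring | ring].
  - intros (s & Hs & Ha & Hb). exists (Cmul t s). split.
    + intro Z. apply Hs. apply ((mul_integral CSp) t); auto.
    + rewrite O_assoc_C in Ha, Hb. auto.
Qed.
End DegenC.

Lemma point_CO p : is_point CO p -> c0 p = Czero /\ vecC p <> gvz CS.kz.
Proof.
  intros (Hp & Hnz). apply PuA_CO in Hp. split; auto.
  intro Z. apply Hnz. cbv [emb]. apply co_eq; [exact Hp | rewrite Z, vecC_zero; reflexivity].
Qed.

Lemma ptset_CO p q : is_point CO p -> is_point CO q -> pt_set CO p <> pt_set CO q ->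
  (Dg CSp) (vecC p) (vecC q) <> CS.kz.
Proof.
  intros Pp Pq Hne HD0. apply point_CO in Pp as (rp & np). apply point_CO in Pq as (rq & nq).
  apply Hne. pose proof ((cs CSp) (vecC p) (vecC q) (P_vecC p) (P_vecC q) HD0) as C1.
  assert (Hpp : CS.h (vecC p) (vecC p) <> Czero).
  { intro Z. apply np. apply CS.h_pos; [apply P_vecC | exact Z]. }
  apply (vsc_div CSp) in C1; auto.
  match type of C1 with _ = gvsc _ _ ?T => set (t := T) in * end.
  assert (Eq : q = Omul p (CtoO t)).
  { apply co_eq. rewrite OmulC_c0, rp, rq. ring.
    rewrite OmulC_vecC. exact C1. }
  assert (Ht : t <> Czero).
  { intro Z. apply nq. rewrite C1, Z. apply vext; cbn; uc; ring. }
  apply functional_extensionality; intro a.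
  apply propositional_extensionality. unfold pt_set. cbv [ascale Fty Aty] in *. rewrite Eq. split.
  - intros (s & Ha). exists (Cmul s (Cinv t)). rewrite O_assoc_C.
    replace (Cmul t (Cmul s (Cinv t))) with s. auto.
    transitivity (Cmul s (Cmul t (Cinv t))); [rewrite Cinv_l by auto; ring | ring].
  - intros (s & Ha). exists (Cmul t s). rewrite O_assoc_C in Ha. auto.
Qed.

Theorem main_CO :
  (forall (x y : Aty CO) (u v : Oc),
     is_line CO x u -> is_line CO y v ->
     line_set CO x u <> line_set CO y v ->
     ((exists phi : Aty CO -> Oc,
         sharp CO phi /\ line_plane_inc CO x u phi /\ line_plane_inc CO y v phi)
        <-> ipA CO x y = ip CO u v) /\
     (ipA CO x y = ip CO u v ->
        exists! phi : Aty CO -> Oc,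
          sharp CO phi /\ phi x = u /\ phi y = v) /\
     (ipA CO x y = ip CO u v ->
        exists! phi : Aty CO -> Oc,
          sharp CO phi /\ line_plane_inc CO x u phi /\ line_plane_inc CO y v phi))
  /\
  (forall (x y : Aty CO) (u v : Oc) (p q : Aty CO),
     is_line CO x u -> is_line CO y v ->
     is_point CO p -> is_point CO q -> pt_set CO p <> pt_set CO q ->
     pt_line_inc CO p x u -> pt_line_inc CO p y v ->
     pt_line_inc CO q x u -> pt_line_inc CO q y v ->
     forall r : Aty CO, is_point CO r ->
       (pt_line_inc CO r x u <-> pt_line_inc CO r y v)).
Proof.
  split.
  - intros x y u v Lx Ly Hne.
    destruct (line_CO _ _ Lx) as (rx & ru & Gxx & Hu).
    destruct (line_CO _ _ Ly) as (ry & rv & Gyy & Hv).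
    assert (Key : ipA CO x y = ip CO u v ->
      exists! phi : Aty CO -> Oc, sharp CO phi /\ phi x = u /\ phi y = v).
    { intro Hip.
      assert (Gxy : CS.h (vecC u) (vecC v) = CS.h (vecC x) (vecC y)).
      { rewrite <- ip_CO, <- ipA_CO; auto. }
      assert (HD : (Dg CSp) (vecC x) (vecC y) <> CS.kz).
      { intro HD0. apply Hne. apply degen_CO; auto. }
      exists (phiC x y u v). split.
      - split; [apply phiC_sharp; auto | split; [apply phiC_x | apply phiC_y]; auto].
      - intros psi (Hs & Hx & Hy). apply functional_extensionality.
        apply (unique_CO x y rx ry); auto using phiC_sharp.
        + rewrite Hx. apply phiC_x; auto.
        + rewrite Hy. apply phiC_y; auto. }
    split; [|split].
    + split.
      * intros (phi & (_ & _ & _ & Hi) & Hx & Hy). unfold line_plane_inc in *.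
        rewrite <- Hi, Hx, Hy. reflexivity.
      * intro Hip. destruct (Key Hip) as (phi & (Hs & Hx & Hy) & _). exists phi. auto.
    + exact Key.
    + intro Hip. exact (Key Hip).
  - intros x y u v p q Lx Ly Pp Pq Hne Ipx Ipy Iqx Iqy r Pr.
    destruct (line_CO _ _ Lx) as (rx & ru & Gxx & Hu).
    destruct (line_CO _ _ Ly) as (ry & rv & Gyy & Hv).
    pose proof (ptset_CO _ _ Pp Pq Hne) as HD.
    apply point_CO in Pp as (rp & np). apply point_CO in Pq as (rq & nq).
    apply point_CO in Pr as (rr & nr).
    unfold pt_line_inc in *. cbv [fzero] in *.
    rewrite ipA_CO in Ipx, Ipy, Iqx, Iqy by auto. rewrite !ipA_CO by auto.
    assert (nx : vecC x <> gvz CS.kz).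
    { intro Z. apply Hu. rewrite Gxx, Z. apply h_vz_C. }
    assert (ny : vecC y <> gvz CS.kz).
    { intro Z. apply Hv. rewrite Gyy, Z. apply h_vz_C. }
    apply ((perp_equiv CSp) (vecC p) (vecC q) (Q_vecC p) (Q_vecC q) HD); auto using Q_vecC.
Qed.

Theorem mainTheorem2 (k : case) :
  (forall (x y : Aty k) (u v : Oc),
     is_line k x u -> is_line k y v ->
     line_set k x u <> line_set k y v ->
     ((exists phi : Aty k -> Oc,
         sharp k phi /\ line_plane_inc k x u phi /\ line_plane_inc k y v phi)
        <-> ipA k x y = ip k u v) /\
     (ipA k x y = ip k u v ->
        exists! phi : Aty k -> Oc,
          sharp k phi /\ phi x = u /\ phi y = v) /\
     (ipA k x y = ip k u v ->
        exists! phi : Aty k -> Oc,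
          sharp k phi /\ line_plane_inc k x u phi /\ line_plane_inc k y v phi))
  /\
  (forall (x y : Aty k) (u v : Oc) (p q : Aty k),
     is_line k x u -> is_line k y v ->
     is_point k p -> is_point k q -> pt_set k p <> pt_set k q ->
     pt_line_inc k p x u -> pt_line_inc k p y v ->
     pt_line_inc k q x u -> pt_line_inc k q y v ->
     forall r : Aty k, is_point k r ->
       (pt_line_inc k r x u <-> pt_line_inc k r y v)).
Proof. destruct k; [exact main_RH | exact main_CO]. Qed.
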